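(* Let $r,k\in\mathbb Z$ with $0\le k\le r$ and suppose Assumptions (A1), (A2), (A3) hold. Then for $1\le n\le N$, $0\le l\le r$ and all $v\in C^{k_{\mathcal J}+1}(\overline I_n,\mathbb R^d)$, $$\sup_{t\in I_n}\|(\mathcal J_nv)^{(l)}(t)\|\le C\sum_{j=0}^{k_{\mathcal J}+1}\big(\tfrac{\tau_n}{2}\big)^{j-l}\sup_{t\in I_n}\|v^{(j)}(t)\|$$ with $C$ independent of $\tau_n$, $n$ and $v$.
   Context: Mesh $t_0<\dots<t_N$, $I_n=(t_{n-1},t_n]$, $\tau_n=t_n-t_{n-1}\le1$; one-sided limits $v(t_n^\pm)$. $T_n(\hat t)=\frac{t_n+t_{n-1}}{2}+\frac{\tau_n}{2}\hat t$. $\|\cdot\|$, $(\cdot,\cdot)$ Euclidean norm/inner product on $\mathbb R^d$; $P_s$ polynomials of degree $\le s$; $\delta_{i,j}$ Kronecker symbol. Operators: $\widehat{\mathscr I}$ linear functional, $\widehat{\mathcal I}$ linear operator; $k_{\mathscr I},k_{\mathcal I}\ge0$ smallest integers such that they are well defined on $C^{k_{\mathscr I}}([-1,1])$ resp. $C^{k_{\mathcal I}}([-1,1])$; $\widehat{\mathcal I}\hat v\in C^l$ whenever $\hat v\in C^{\max\{k_{\mathcal I},l\}}$. Local: $\mathscr I_n[\varphi]=\frac{\tau_n}{2}\widehat{\mathscr I}[\varphi\circ T_n]$, $\mathcal I_n\psi=(\widehat{\mathcal I}(\psi\circ T_n))\circ T_n^{-1}$, componentwise. $k_{\mathcal J}:=\max\{\lfloor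 k/2\rfloor-1,k_{\mathscr I},k_{\mathcal I}\}$. $\mathcal J_n v\in P_r(I_n,\mathbb R^d)$ for $v\in C^{k_{\mathcal J}+1}(\overline I_n,\mathbb R^d)$ is defined by: if $k\ge1$, $(\mathcal J_nv)^{(i)}(t_{n-1}^+)=v^{(i)}(t_{n-1}^+)$, $i=0,\dots,\lfloor (k-1)/2\rfloor$; if $k\ge2$, $(\mathcal J_nv)^{(i)}(t_n^-)=v^{(i)}(t_n^-)$, $i=1,\dots,\lfloor k/2\rfloor$; and $\mathscr I_n[((\mathcal J_nv)',\varphi)]+\delta_{0,k}(\mathcal J_nv(t_{n-1}^+),\varphi(t_{n-1}^+))=\mathscr I_n[(\mathcal I_n(v'),\varphi)]+\delta_{0,k}(v(t_{n-1}^+),\varphi(t_{n-1}^+))$ for all $\varphi\in P_{r-k}(I_n,\mathbb R^d)$ (well defined under (A1)). (A1): whenever $\hat\psi\in P_{r-\max\{1,k\}}([-1,1])$ satisfies $\widehat{\mathscr I}[(1-\hat t)^{\lfloor k/2\rfloor}(1+\hat t)^{|\lfloor (k-1)/2\rfloor|}\hat\psi\hat\varphi]=0$ for all $\hat\varphi\in P_{r-\max\{1,k\}}([-1,1])$, then $\hat\psi\equiv0$. (A2): $\|\widehat{\mathscr I}[\hat\varphi]\|\le\mathfrak C_0\sum_{j=0}^{k_{\mathscr I}}\sup_{[-1,1]}\|\hat\varphi^{(j)}\|$ for all $\hat\varphi\in C^{k_{\mathscr I}}([-1,1],\mathbb R^d)$. (A3): for $0\le l\le k_{\mathscr I}$,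 $\sup_{[-1,1]}\|(\widehat{\mathcal I}\hat\varphi)^{(l)}\|\le\mathfrak C_1\sum_{j=0}^{\max\{k_{\mathcal I},l\}}\sup_{[-1,1]}\|\hat\varphi^{(j)}\|$ for all $\hat\varphi\in C^{\max\{k_{\mathcal I},l\}}([-1,1],\mathbb R^d)$. *)

(* Defs.v *)
From Stdlib Require Import Reals ZArith List.
From Coquelicot Require Import Coquelicot.
Open Scope R_scope.

Definition sumlt (d : nat) (f : nat -> R) : R :=
  fold_right Rplus 0 (map f (seq 0 d)).
Definition sumle (m : nat) (f : nat -> R) : R := sumlt (S m) f.

(* R^d-valued data are represented componentwise: components 0..d-1. *)
Definition vfun := nat -> R -> R.

Definition enorm (d : nat) (x : nat -> R) : R := sqrt (sumlt d (fun i => x i ^ 2)).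
Definition inner (d : nat) (x y : nat -> R) : R := sumlt d (fun i => x i * y i).

Definition Ck (m : nat) (f : R -> R) : Prop :=
  (forall j x, (j < m)%nat -> ex_derive (Derive_n f j) x) /\
  (forall x, continuous (Derive_n f m) x).
Definition vCk (d m : nat) (v : vfun) : Prop :=
  forall c, (c < d)%nat -> Ck m (v c).

Definition is_poly (s : nat) (f : R -> R) : Prop :=
  exists a : nat -> R, forall t, f t = sumle s (fun j => a j * t ^ j).
Definition vpoly (d s : nat) (p : vfun) : Prop :=
  forall c, (c < d)%nat -> is_poly s (p c).

Definition functional := (R -> R) -> R.
Definition operator := (R -> R) -> (R -> R).

Definition lin_functional (kI : nat) (I : functional) : Prop :=
  forall a b f g, Ck kI f -> Ck kI g ->
    I (fun x => a * f x + b * g x) = a * I f + b * I g.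
Definition lin_operator (kO : nat) (O : operator) : Prop :=
  forall a b f g, Ck kO f -> Ck kO g -> forall x,
    O (fun y => a * f y + b * g y) x = a * O f x + b * O g x.
Definition smoothing (kO : nat) (O : operator) : Prop :=
  forall l f, Ck (Nat.max kO l) f -> Ck l (O f).

(* affine map T_n and its inverse, for I_n = (a, b] *)
Definition Tn (a b s : R) : R := (b + a) / 2 + (b - a) / 2 * s.
Definition Tinv (a b t : R) : R := (2 * t - (b + a)) / (b - a).
Definition locI (I : functional) (a b : R) (f : R -> R) : R :=
  (b - a) / 2 * I (fun s => f (Tn a b s)).
Definition locO (O : operator) (a b : R) (f : R -> R) : R -> R :=
  fun t => O (fun s => f (Tn a b s)) (Tinv a b t).

Definition kron0 (k : nat) : R := if Nat.eqb k 0 then 1 else 0.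

(* k_J = max(floor(k/2) - 1, kI, kO) (truncation harmless since kI >= 0) *)
Definition kJ (k kI kO : nat) : nat := Nat.max (k / 2 - 1) (Nat.max kI kO).

Definition is_J (d r k : nat) (I : functional) (O : operator) (a b : R)
  (v p : vfun) : Prop :=
  vpoly d r p /\
  ((1 <= k)%nat -> forall i c, (i <= (k - 1) / 2)%nat -> (c < d)%nat ->
      Derive_n (p c) i a = Derive_n (v c) i a) /\
  ((2 <= k)%nat -> forall i c, (1 <= i <= k / 2)%nat -> (c < d)%nat ->
      Derive_n (p c) i b = Derive_n (v c) i b) /\
  (forall phi : vfun, vpoly d (r - k) phi ->
     locI I a b (fun t => inner d (fun c => Derive (p c) t) (fun c => phi c t))
       + kron0 k * inner d (fun c => p c a) (fun c => phi c a)
     = locI I a b (fun t => inner d (fun c => locO O a b (Derive (v c)) t)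
                                     (fun c => phi c t))
       + kron0 k * inner d (fun c => v c a) (fun c => phi c a)).

Definition AssumptionA1 (r k : nat) (I : functional) : Prop :=
  (Nat.max 1 k <= r)%nat ->
  forall psi, is_poly (r - Nat.max 1 k) psi ->
  (forall phi, is_poly (r - Nat.max 1 k) phi ->
     I (fun s => (1 - s) ^ (k / 2) * (1 + s) ^ (if Nat.eqb k 0 then 1 else (k - 1) / 2)
                 * psi s * phi s) = 0) ->
  forall s, -1 <= s <= 1 -> psi s = 0.

(* (AssumptionA2); sup-bounds expressed through arbitrary upper bounds M j *)
Definition AssumptionA2 (d kI : nat) (I : functional) : Prop :=
  exists C0, forall phi : vfun, vCk d kI phi ->
    forall M : nat -> R,
      (forall j s, (j <= kI)%nat -> -1 <= s <= 1 ->
          enorm d (fun c => Derive_n (phi c) j s) <= M j) ->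
      enorm d (fun c => I (phi c)) <= C0 * sumle kI M.

Definition AssumptionA3 (d kI kO : nat) (O : operator) : Prop :=
  exists C1, forall l, (l <= kI)%nat -> forall phi : vfun,
    vCk d (Nat.max kO l) phi ->
    forall M : nat -> R,
      (forall j s, (j <= Nat.max kO l)%nat -> -1 <= s <= 1 ->
          enorm d (fun c => Derive_n (phi c) j s) <= M j) ->
      forall s, -1 <= s <= 1 ->
        enorm d (fun c => Derive_n (O (phi c)) l s) <= C1 * sumle (Nat.max kO l) M.

Definition mesh (N : nat) (t : nat -> R) : Prop :=
  forall n, (1 <= n <= N)%nat -> t (n - 1)%nat < t n /\ t n - t (n - 1)%nat <= 1.

(* Main.v *)
Require Import Defs.
From Stdlib Require Import Reals ZArith List Lra Lia Classical FunctionalExtensionality.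
From Coquelicot Require Import Coquelicot.
Open Scope R_scope.


Fixpoint sm (n : nat) (f : nat -> R) : R :=
  match n with O => 0 | S n' => sm n' f + f n' end.

Lemma sm_shift n f : sm (S n) f = f O + sm n (fun i => f (S i)).
Proof. induction n; simpl in *. lra. rewrite IHn. lra. Qed.

Lemma sm_ext n f g : (forall i, (i < n)%nat -> f i = g i) -> sm n f = sm n g.
Proof. induction n; intros H; simpl. auto. rewrite IHn by (intros; apply H; lia). rewrite H by lia. auto. Qed.

Lemma sumlt_sm n f : sumlt n f = sm n f.
Proof.
  unfold sumlt.
  assert (H: forall s, fold_right Rplus 0 (map f (seq s n)) = sm n (fun i => f (s + i)%nat)).
  { induction n; intros s. reflexivity.
    simpl (seq s (S n)). simpl (map f _). simpl (fold_right _ _ _).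
    rewrite IHn. rewrite sm_shift. rewrite Nat.add_0_r.
    f_equal. apply sm_ext. intros; f_equal; lia. }
  rewrite H. f_equal.
Qed.

Lemma sumle_sm m f : sumle m f = sm (S m) f.
Proof. unfold sumle; apply sumlt_sm. Qed.

Lemma sm_plus n f g : sm n (fun i => f i + g i) = sm n f + sm n g.
Proof. induction n; simpl. lra. rewrite IHn. lra. Qed.

Lemma sm_scal n c f : sm n (fun i => c * f i) = c * sm n f.
Proof. induction n; simpl. lra. rewrite IHn. lra. Qed.

Lemma sm_abs n f : Rabs (sm n f) <= sm n (fun i => Rabs (f i)).
Proof. induction n; simpl. rewrite Rabs_R0; lra.
  eapply Rle_trans. apply Rabs_triang. lra. Qed.

Lemma sm_le n f g : (forall i, (i < n)%nat -> f i <= g i) -> sm n f <= sm n g.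
Proof. induction n; intros H; simpl. lra. assert (f n <= g n) by (apply H; lia).
  assert (sm n f <= sm n g) by (apply IHn; intros; apply H; lia). lra. Qed.

Lemma sm_nonneg n f : (forall i, (i < n)%nat -> 0 <= f i) -> 0 <= sm n f.
Proof. intros H. replace 0 with (sm n (fun _ => 0)). apply sm_le; auto.
  clear H; induction n; simpl; lra. Qed.

Lemma sm_zero n : sm n (fun _ => 0) = 0.
Proof. induction n; simpl; lra. Qed.

Lemma sm_single n f i0 : (i0 < n)%nat -> (forall i, (i < n)%nat -> i <> i0 -> f i = 0) -> sm n f = f i0.
Proof. induction n; intros Hi H. lia. simpl.
  destruct (Nat.eq_dec i0 n). subst. rewrite (sm_ext n f (fun _ => 0)). rewrite sm_zero. lra.
  intros; apply H; lia.
  rewrite IHn. rewrite (H n); try lia. lra. lia. intros; apply H; lia. Qed.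

Lemma sm_term_le n f i0 : (i0 < n)%nat -> (forall i, (i < n)%nat -> 0 <= f i) -> f i0 <= sm n f.
Proof. induction n; intros Hi H. lia. simpl.
  destruct (Nat.eq_dec i0 n). subst. assert (0 <= sm n f) by (apply sm_nonneg; intros; apply H; lia). lra.
  assert (f i0 <= sm n f) by (apply IHn; try lia; intros; apply H; lia). assert (0 <= f n) by (apply H; lia). lra. Qed.

Lemma sm_extend n m f : (n <= m)%nat -> (forall i, (n <= i < m)%nat -> f i = 0) -> sm m f = sm n f.
Proof. induction m; intros Hnm H. replace n with O by lia. auto.
  destruct (Nat.eq_dec n (S m)). subst; auto.
  simpl. rewrite IHm by (try lia; intros; apply H; lia). rewrite H by lia. lra. Qed.

Lemma sm_mono n m f : (n <= m)%nat -> (forall i, (i < m)%nat -> 0 <= f i) -> sm n f <= sm m f.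
Proof. induction m; intros Hnm H. replace n with O by lia. lra.
  destruct (Nat.eq_dec n (S m)). subst; lra.
  simpl. assert (sm n f <= sm m f) by (apply IHm; try lia; intros; apply H; lia). assert (0 <= f m) by (apply H; lia). lra. Qed.

Lemma sm_sum_swap n m (F : nat -> nat -> R) :
  sm n (fun i => sm m (fun j => F i j)) = sm m (fun j => sm n (fun i => F i j)).
Proof. induction n; simpl. rewrite sm_zero; auto. rewrite IHn. rewrite <- sm_plus. auto. Qed.


Lemma cont_plus (f g : R -> R) x : continuous f x -> continuous g x -> continuous (fun y => f y + g y) x.
Proof. intros. exact (continuous_plus f g x H H0). Qed.
Lemma cont_mult (f g : R -> R) x : continuous f x -> continuous g x -> continuous (fun y => f y * g y) x.
Proof. intros. exact (continuous_mult f g x H H0). Qed.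
Lemma cont_const (c x : R) : continuous (fun _ => c) x.
Proof. exact (continuous_const (U:=R_UniformSpace) (V:=R_UniformSpace) c x). Qed.
Lemma cont_id (x : R) : continuous (fun y => y) x.
Proof. exact (continuous_id (U:=R_UniformSpace) x). Qed.
Lemma cont_comp (f g : R -> R) x : continuous f x -> continuous g (f x) -> continuous (fun y => g (f y)) x.
Proof. intros. exact (continuous_comp f g x H H0). Qed.

Lemma exd_plus (f g : R -> R) x : ex_derive f x -> ex_derive g x -> ex_derive (fun y => f y + g y) x.
Proof. intros. exact (ex_derive_plus f g x H H0). Qed.
Lemma exd_mult (f g : R -> R) x : ex_derive f x -> ex_derive g x -> ex_derive (fun y => f y * g y) x.
Proof. intros. exact (ex_derive_mult f g x H H0). Qed.
Lemma exd_scal (c : R) (f : R -> R) x : ex_derive f x -> ex_derive (fun y => c * f y) x.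
Proof. intros. exact (ex_derive_scal f c x H). Qed.
Lemma exd_const (c x : R) : ex_derive (fun _ => c) x.
Proof. exact (ex_derive_const (K:=R_AbsRing) (V:=R_NormedModule) c x). Qed.
Lemma exd_id (x : R) : ex_derive (fun y => y) x.
Proof. exact (ex_derive_id (K:=R_AbsRing) x). Qed.
Lemma exd_comp (f g : R -> R) x : ex_derive f (g x) -> ex_derive g x -> ex_derive (fun y => f (g y)) x.
Proof. intros. exact (ex_derive_comp f g x H H0). Qed.
Lemma Der_plus (f g : R -> R) x : ex_derive f x -> ex_derive g x -> Derive (fun y => f y + g y) x = Derive f x + Derive g x.
Proof. intros. exact (Derive_plus f g x H H0). Qed.

Lemma exd_cont (f : R -> R) x : ex_derive f x -> continuous f x.
Proof. apply (ex_derive_continuous (K:=R_AbsRing) (V:=R_NormedModule)). Qed.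

Lemma Dn_S_fun f j : Derive_n (Derive f) j = Derive_n f (S j).
Proof. apply functional_extensionality; intros x.
  change (Derive f) with (Derive_n f 1). rewrite Derive_n_comp. f_equal. lia. Qed.

Lemma Dn_S f j x : Derive_n f (S j) x = Derive_n (Derive f) j x.
Proof. rewrite Dn_S_fun; auto. Qed.

Lemma Ck_S n f : Ck (S n) f <-> (forall x, ex_derive f x) /\ Ck n (Derive f).
Proof. unfold Ck. rewrite Dn_S_fun. split.
  - intros [H1 H2]. split. intros x. apply (H1 O x). lia. split; auto.
    intros j x Hj. rewrite Dn_S_fun. apply H1. lia.
  - intros [H1 [H2 H3]]. split; auto. intros j x Hj. destruct j. apply H1.
    rewrite <- Dn_S_fun. apply H2. lia. Qed.

Lemma Ck_0 f : Ck 0 f <-> forall x, continuous f x.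
Proof. unfold Ck. split. intros [_ H]; exact H. intros H; split. intros; lia. exact H. Qed.

Lemma Ck_cont n f : Ck n f -> forall x, continuous f x.
Proof. destruct n; intros H x. apply (proj1 (Ck_0 f) H). apply Ck_S in H. apply exd_cont. apply (proj1 H). Qed.

Lemma Ck_mono n f : Ck (S n) f -> Ck n f.
Proof. intros [H1 H2]. split. intros; apply H1; lia. intros x. apply exd_cont. apply H1; lia. Qed.

Lemma Ck_le m n f : (m <= n)%nat -> Ck n f -> Ck m f.
Proof. induction n; intros Hmn H. replace m with O by lia. auto.
  destruct (Nat.eq_dec m (S n)). subst; auto. apply IHn. lia. apply Ck_mono; auto. Qed.

Lemma Ck_ext n f g : (forall x, f x = g x) -> Ck n f -> Ck n g.
Proof. intros H. replace g with f. auto. apply functional_extensionality; auto. Qed.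

Lemma Ck_const n c : Ck n (fun _ => c).
Proof. revert c; induction n; intros c. apply Ck_0; intros; apply cont_const.
  apply Ck_S; split. intros; apply exd_const.
  apply (Ck_ext _ (fun _ => 0)). intros; rewrite Derive_const; auto. apply IHn. Qed.

Lemma Ck_plus n f g : Ck n f -> Ck n g -> Ck n (fun x => f x + g x).
Proof. revert f g; induction n; intros f g Hf Hg.
  apply Ck_0; intros. apply cont_plus; apply Ck_cont with O; auto.
  apply Ck_S in Hf; apply Ck_S in Hg. destruct Hf as [Hf1 Hf2]; destruct Hg as [Hg1 Hg2].
  apply Ck_S; split. intros; apply exd_plus; auto.
  apply (Ck_ext _ (fun x => Derive f x + Derive g x)). intros; rewrite Der_plus; auto.
  apply IHn; auto. Qed.

Lemma Ck_scal n c f : Ck n f -> Ck n (fun x => c * f x).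
Proof. revert f; induction n; intros f Hf.
  apply Ck_0; intros. apply cont_mult. apply cont_const. apply Ck_cont with O; auto.
  apply Ck_S in Hf. destruct Hf as [Hf1 Hf2].
  apply Ck_S; split. intros; apply exd_scal; auto.
  apply (Ck_ext _ (fun x => c * Derive f x)). intros; rewrite Derive_scal; auto.
  apply IHn; auto. Qed.

Lemma Ck_mult n f g : Ck n f -> Ck n g -> Ck n (fun x => f x * g x).
Proof. revert f g; induction n; intros f g Hf Hg.
  apply Ck_0; intros. apply cont_mult; apply Ck_cont with O; auto.
  pose proof (Ck_mono _ _ Hf) as Hf'. pose proof (Ck_mono _ _ Hg) as Hg'.
  apply Ck_S in Hf; apply Ck_S in Hg. destruct Hf as [Hf1 Hf2]; destruct Hg as [Hg1 Hg2].
  apply Ck_S; split. intros; apply exd_mult; auto.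
  apply (Ck_ext _ (fun x => Derive f x * g x + f x * Derive g x)). intros; rewrite Derive_mult; auto.
  apply Ck_plus; apply IHn; auto. Qed.

Lemma Ck_id n : Ck n (fun x => x).
Proof. destruct n. apply Ck_0; intros; apply cont_id.
  apply Ck_S; split. intros; apply exd_id.
  apply (Ck_ext _ (fun _ => 1)). intros. symmetry; apply Derive_id. apply Ck_const. Qed.

Lemma Ck_pow n j : Ck n (fun x => x ^ j).
Proof. induction j. simpl. apply Ck_const. simpl. apply Ck_mult; auto. apply Ck_id. Qed.

Lemma Ck_sum n m (F : nat -> R -> R) : (forall i, (i < m)%nat -> Ck n (F i)) ->
  Ck n (fun x => sm m (fun i => F i x)).
Proof. induction m; intros H; simpl. apply Ck_const. apply Ck_plus. apply IHm; intros; apply H; lia.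
  apply H; lia. Qed.

Lemma ex_derive_aff (be al x : R) : ex_derive (fun s => be + al * s) x.
Proof. apply exd_plus. apply exd_const. apply exd_scal. apply exd_id. Qed.

Lemma Derive_aff (be al x : R) : Derive (fun s => be + al * s) x = al.
Proof. rewrite Der_plus. rewrite Derive_const. rewrite Derive_scal. rewrite Derive_id. lra.
  apply exd_const. apply exd_scal. apply exd_id. Qed.

Lemma Ck_comp_aff n be al f : Ck n f -> Ck n (fun s => f (be + al * s)).
Proof. revert f; induction n; intros f Hf.
  apply Ck_0; intros x. apply (cont_comp (fun s => be + al * s) f).
  apply exd_cont, ex_derive_aff. apply Ck_cont with O; auto.
  apply Ck_S in Hf. destruct Hf as [Hf1 Hf2].
  apply Ck_S; split. intros x. apply (exd_comp f (fun s => be + al * s)). apply Hf1. apply ex_derive_aff.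
  apply (Ck_ext _ (fun x => al * Derive f (be + al * x))).
  intros x. rewrite (Derive_comp f (fun s => be + al * s)). rewrite Derive_aff. auto. apply Hf1. apply ex_derive_aff.
  apply Ck_scal. apply IHn. auto. Qed.

Definition smooth (f : R -> R) := forall n, Ck n f.

Lemma smooth_Derive f : smooth f -> smooth (Derive f).
Proof. intros H n. exact (proj2 (proj1 (Ck_S n f) (H (S n)))). Qed.

Lemma smooth_ex_derive f x : smooth f -> ex_derive f x.
Proof. intros H. destruct (proj1 (Ck_S 0 f) (H 1%nat)) as [H1 _]; apply H1. Qed.

Lemma Dn_plus n f g : Ck n f -> Ck n g -> forall x,
  Derive_n (fun y => f y + g y) n x = Derive_n f n x + Derive_n g n x.
Proof. revert f g; induction n; intros f g Hf Hg x. reflexivity.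
  apply Ck_S in Hf; apply Ck_S in Hg. destruct Hf as [Hf1 Hf2]; destruct Hg as [Hg1 Hg2].
  rewrite !Dn_S. rewrite (Derive_n_ext _ (fun y => Derive f y + Derive g y)).
  apply IHn; auto. intros; apply Der_plus; auto. Qed.

Lemma Dn_sum n m (F : nat -> R -> R) : (forall i, (i < m)%nat -> Ck n (F i)) -> forall x,
  Derive_n (fun y => sm m (fun i => F i y)) n x = sm m (fun i => Derive_n (F i) n x).
Proof. induction m; intros H x; simpl.
  destruct n. reflexivity. rewrite Dn_S. rewrite (Derive_n_ext _ (fun _ => 0)).
  clear; revert x; induction n; intros x; simpl. auto. rewrite (Derive_ext _ (fun _ => 0)).
  apply Derive_const. auto. intros; apply Derive_const.
  rewrite Dn_plus. rewrite IHm. auto. intros; apply H; lia. apply Ck_sum; intros; apply H; lia.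
  apply H; lia. Qed.

Lemma Dn_comp_aff n be al f : Ck n f -> forall x,
  Derive_n (fun s => f (be + al * s)) n x = al ^ n * Derive_n f n (be + al * x).
Proof. revert f; induction n; intros f Hf x. simpl; lra.
  apply Ck_S in Hf. destruct Hf as [Hf1 Hf2].
  rewrite !Dn_S. rewrite (Derive_n_ext _ (fun s => al * Derive f (be + al * s))).
  rewrite Derive_n_scal_l. rewrite IHn; auto. simpl; lra.
  intros t. rewrite (Derive_comp f (fun s => be + al * s)). rewrite Derive_aff. auto. apply Hf1. apply ex_derive_aff.
Qed.

Definition Sn (n : nat) (f : R -> R) (x : R) := sm (S n) (fun i => Rabs (Derive_n f i x)).

Lemma Sn_nonneg n f x : 0 <= Sn n f x.
Proof. apply sm_nonneg; intros; apply Rabs_pos. Qed.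

Lemma Sn_Derive n f x : Sn n (Derive f) x <= Sn (S n) f x.
Proof. unfold Sn. rewrite (sm_shift (S n)). 
  rewrite (sm_ext _ _ (fun i => Rabs (Derive_n f (S i) x))). pose proof (Rabs_pos (Derive_n f 0 x)). lra.
  intros; rewrite Dn_S; auto. Qed.

Lemma Sn_S n f x : Sn n f x <= Sn (S n) f x.
Proof. unfold Sn. assert (E: forall h, sm (S (S n)) h = sm (S n) h + h (S n)) by reflexivity. rewrite E. pose proof (Rabs_pos (Derive_n f (S n) x)). lra. Qed.

Lemma Dn_mult_bound n f g : Ck n f -> Ck n g -> forall x,
  Rabs (Derive_n (fun y => f y * g y) n x) <= 2 ^ n * Sn n f x * Sn n g x.
Proof. revert f g; induction n; intros f g Hf Hg x.
  unfold Sn; simpl. rewrite Rabs_mult. lra.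
  pose proof (Ck_mono _ _ Hf) as Hf'. pose proof (Ck_mono _ _ Hg) as Hg'.
  apply Ck_S in Hf; apply Ck_S in Hg. destruct Hf as [Hf1 Hf2]; destruct Hg as [Hg1 Hg2].
  rewrite Dn_S. rewrite (Derive_n_ext _ (fun y => Derive f y * g y + f y * Derive g y)).
  rewrite Dn_plus. 2,3: apply Ck_mult; auto.
  eapply Rle_trans. apply Rabs_triang.
  pose proof (IHn _ _ Hf2 Hg' x). pose proof (IHn _ _ Hf' Hg2 x).
  pose proof (Sn_Derive n f x). pose proof (Sn_Derive n g x). pose proof (Sn_S n f x). pose proof (Sn_S n g x).
  pose proof (Sn_nonneg n f x). pose proof (Sn_nonneg n g x).
  pose proof (Sn_nonneg n (Derive f) x). pose proof (Sn_nonneg n (Derive g) x).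
  assert (0 < 2 ^ n) by (apply pow_lt; lra).
  assert (Sn n (Derive f) x * Sn n g x <= Sn (S n) f x * Sn (S n) g x) by (apply Rmult_le_compat; lra).
  assert (Sn n f x * Sn n (Derive g) x <= Sn (S n) f x * Sn (S n) g x) by (apply Rmult_le_compat; lra).
  simpl. nra.
  intros; apply Derive_mult; auto. Qed.


Definition peval (n : nat) (a : nat -> R) (t : R) := sm (S n) (fun j => a j * t ^ j).

Lemma is_poly_iff n f : is_poly n f <-> exists a, forall t, f t = peval n a t.
Proof. unfold is_poly, peval. split; intros [a H]; exists a; intros t; rewrite H; rewrite sumle_sm; auto. Qed.

Lemma poly_ext n f g : (forall t, f t = g t) -> is_poly n f -> is_poly n g.
Proof. intros H [a Ha]. exists a. intros t. rewrite <- H. auto. Qed.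

Lemma peval_smooth n a : smooth (peval n a).
Proof. intros m. unfold peval. apply (Ck_sum m (S n) (fun j t => a j * t ^ j)).
  intros; apply Ck_scal; apply Ck_pow. Qed.

Lemma poly_smooth n f : is_poly n f -> smooth f.
Proof. intros H m. apply is_poly_iff in H. destruct H as [a Ha].
  apply (Ck_ext _ (peval n a)). intros; auto. apply peval_smooth. Qed.

Lemma poly_mono n m f : (n <= m)%nat -> is_poly n f -> is_poly m f.
Proof. intros Hnm H. apply is_poly_iff in H. destruct H as [a Ha]. apply is_poly_iff.
  exists (fun j => if Nat.leb j n then a j else 0). intros t. rewrite Ha. unfold peval.
  rewrite (sm_extend (S n) (S m)). apply sm_ext. intros i Hi.
  replace (Nat.leb i n) with true. auto. symmetry; apply Nat.leb_le; lia. lia.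
  intros i Hi. replace (Nat.leb i n) with false. lra. symmetry; apply Nat.leb_gt; lia. Qed.

Lemma poly_const n c : is_poly n (fun _ => c).
Proof. apply (poly_mono 0). lia. apply is_poly_iff. exists (fun _ => c). intros; unfold peval; simpl; lra. Qed.

Lemma poly_plus n f g : is_poly n f -> is_poly n g -> is_poly n (fun t => f t + g t).
Proof. intros Hf Hg. apply is_poly_iff in Hf; apply is_poly_iff in Hg. destruct Hf as [a Ha]; destruct Hg as [b Hb].
  apply is_poly_iff. exists (fun j => a j + b j). intros t. rewrite Ha, Hb. unfold peval.
  rewrite <- sm_plus. apply sm_ext. intros; lra. Qed.

Lemma poly_scal n c f : is_poly n f -> is_poly n (fun t => c * f t).
Proof. intros Hf. apply is_poly_iff in Hf. destruct Hf as [a Ha].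
  apply is_poly_iff. exists (fun j => c * a j). intros t. rewrite Ha. unfold peval.
  rewrite <- sm_scal. apply sm_ext. intros; lra. Qed.

Lemma poly_sum n m (F : nat -> R -> R) : (forall i, (i < m)%nat -> is_poly n (F i)) ->
  is_poly n (fun t => sm m (fun i => F i t)).
Proof. induction m; intros H; simpl. apply poly_const. apply poly_plus. apply IHm; intros; apply H; lia.
  apply H; lia. Qed.

Lemma poly_horner n f : is_poly (S n) f -> exists c h, is_poly n h /\ forall t, f t = c + t * h t.
Proof. intros H. apply is_poly_iff in H. destruct H as [a Ha]. exists (a O), (peval n (fun j => a (S j))).
  split. apply is_poly_iff. exists (fun j => a (S j)); auto.
  intros t. rewrite Ha. unfold peval. rewrite sm_shift. rewrite <- sm_scal.
  replace (a 0%nat * t^0) with (a 0%nat) by (simpl; ring).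
  f_equal. apply sm_ext. intros; simpl; lra. Qed.

Lemma poly_mul_x n h : is_poly n h -> is_poly (S n) (fun t => t * h t).
Proof. intros H. apply is_poly_iff in H. destruct H as [a Ha]. apply is_poly_iff.
  exists (fun j => match j with O => 0 | S j' => a j' end). intros t. rewrite Ha. unfold peval.
  rewrite (sm_shift (S n)). rewrite <- sm_scal. cbv beta iota.
  rewrite (sm_ext _ _ (fun i => a i * t ^ S i)). lra. intros; simpl; lra. Qed.

Lemma poly_mul_aff n be al h : is_poly n h -> is_poly (S n) (fun t => (be + al * t) * h t).
Proof. intros H. apply (poly_ext _ (fun t => be * h t + al * (t * h t))). intros; lra.
  apply poly_plus. apply poly_scal. apply (poly_mono n); auto. apply poly_scal. apply poly_mul_x; auto. Qed.

Lemma poly_aff_pow j be al : is_poly j (fun t => (be + al * t) ^ j).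
Proof. induction j. apply (poly_const 0 1). simpl. apply poly_mul_aff; auto. Qed.

Lemma poly_comp_aff n be al f : is_poly n f -> is_poly n (fun s => f (be + al * s)).
Proof. intros H. apply is_poly_iff in H. destruct H as [a Ha].
  apply (poly_ext _ (fun s => sm (S n) (fun j => a j * (be + al * s) ^ j))). intros; rewrite Ha; auto.
  apply poly_sum. intros i Hi. apply poly_scal. apply (poly_mono i). lia. apply poly_aff_pow. Qed.

Lemma poly0_const f : is_poly 0 f -> forall t, f t = f 0.
Proof. intros [a Ha] t. rewrite !Ha. unfold sumle, sumlt. simpl. lra. Qed.

Lemma poly0_deriv f : is_poly 0 f -> forall t, Derive f t = 0.
Proof. intros H t. rewrite (Derive_ext _ (fun _ => f 0)). apply Derive_const. apply poly0_const; auto. Qed.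

Lemma Der_id x : Derive (fun y => y) x = 1.
Proof. apply Derive_id. Qed.

Lemma Derive_xh (c : R) h t : smooth h -> Derive (fun t => c + t * h t) t = h t + t * Derive h t.
Proof. intros Hs. assert (ex_derive h t) by (apply smooth_ex_derive; auto).
  rewrite Der_plus. rewrite Derive_const. rewrite Derive_mult. rewrite Der_id. lra.
  apply exd_id. auto. apply exd_const. apply exd_mult. apply exd_id. auto. Qed.

Lemma poly_deriv n f : is_poly (S n) f -> is_poly n (Derive f).
Proof. revert f; induction n; intros f H.
  - destruct (poly_horner _ _ H) as [c [h [Hh Hf]]].
    apply (poly_ext _ (fun t => h t)). intros t.
    rewrite (Derive_ext f (fun t => c + t * h t)) by auto.
    rewrite Derive_xh. rewrite (poly0_deriv h); auto. lra. apply (poly_smooth 0); auto. auto.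
  - destruct (poly_horner _ _ H) as [c [h [Hh Hf]]].
    apply (poly_ext _ (fun t => h t + t * Derive h t)). intros t.
    rewrite (Derive_ext f (fun t => c + t * h t)) by auto.
    rewrite Derive_xh. auto. apply (poly_smooth (S n)); auto.
    apply poly_plus. auto. apply poly_mul_x. apply IHn; auto. Qed.

Lemma poly_deriv' n f : is_poly n f -> is_poly (n - 1) (Derive f).
Proof. destruct n; intros H. apply (poly_ext _ (fun _ => 0)). intros; symmetry; apply poly0_deriv; auto.
  apply poly_const. replace (S n - 1)%nat with n by lia. apply poly_deriv; auto. Qed.

Lemma cont_bound_left (h : R -> R) a b M : a < b -> continuous h a ->
  (forall t, a < t <= b -> Rabs (h t) <= M) -> Rabs (h a) <= M.
Proof. intros Hab Hc H. apply Rnot_lt_le. intros Hlt.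
  apply continuity_pt_filterlim in Hc. 
  destruct (Hc (Rabs (h a) - M)) as [del [Hdel Hx]]. lra.
  set (t := a + Rmin (del/2) (b - a)).
  assert (Ht : a < t <= b). { unfold t. pose proof (Rmin_l (del/2) (b-a)). pose proof (Rmin_r (del/2) (b-a)).
    assert (0 < Rmin (del/2) (b-a)) by (apply Rmin_glb_lt; lra). lra. }
  specialize (H t Ht). specialize (Hx t). simpl in Hx. unfold R_dist in Hx.
  assert (Rabs (t - a) < del). { unfold t. rewrite Rabs_right. pose proof (Rmin_l (del/2) (b-a)).
     assert (0 < Rmin (del/2) (b-a)) by (apply Rmin_glb_lt; lra). lra.
     assert (0 < Rmin (del/2) (b-a)) by (apply Rmin_glb_lt; lra). lra. }
  assert (Hd : Rabs (h t - h a) < Rabs (h a) - M) by (apply Hx; split; [split; [exact I| lra] | auto]).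
  pose proof (Rabs_triang_inv (h a) (h t)). rewrite <- Rabs_Ropp in Hd. 
  replace (- (h t - h a)) with (h a - h t) in Hd by ring. lra. Qed.


Lemma peval_S n a t : peval (S n) a t = a O + t * peval n (fun j => a (S j)) t.
Proof. unfold peval. rewrite (sm_shift (S n)). rewrite <- sm_scal.
  replace (a 0%nat * t^0) with (a 0%nat) by (simpl; ring).
  f_equal. apply sm_ext. intros; simpl; lra. Qed.

Lemma coeffs_zero n a : (forall t, -1 <= t <= 1 -> peval n a t = 0) -> forall j, (j <= n)%nat -> a j = 0.
Proof. revert a; induction n; intros a H j Hj.
  - replace j with O by lia. specialize (H 0 ltac:(lra)). unfold peval in H. simpl in H. lra.
  - assert (Ha0 : a O = 0). { specialize (H 0 ltac:(lra)). rewrite peval_S in H. lra. }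
    destruct j. auto.
    apply (IHn (fun j => a (S j))). 2: lia.
    assert (Hne : forall t, -1 <= t <= 1 -> t <> 0 -> peval n (fun j => a (S j)) t = 0).
    { intros t Ht Ht0. specialize (H t Ht). rewrite peval_S, Ha0 in H.
      rewrite Rplus_0_l in H. apply Rmult_integral in H. destruct H; auto. contradiction. }
    intros t Ht. destruct (Req_dec t 0). 2: auto. subst t.
    assert (Rabs (peval n (fun j => a (S j)) 0) <= 0).
    { apply (cont_bound_left _ 0 1). lra. apply (Ck_cont 0). apply peval_smooth.
      intros t Ht'. rewrite Hne. rewrite Rabs_R0; lra. lra. lra. }
    pose proof (Rabs_pos (peval n (fun j => a (S j)) 0)).
    assert (Rabs (peval n (fun j => a (S j)) 0) = 0) by lra. apply Rabs_eq_0 in H2. auto. Qed.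

Lemma poly_factor n f c : is_poly n f -> f c = 0 ->
  exists g, is_poly (pred n) g /\ forall t, f t = (t - c) * g t.
Proof. revert f; induction n; intros f Hf Hc.
  - exists (fun _ => 0). split. apply poly_const. intros t. rewrite (poly0_const f Hf t).
    rewrite <- (poly0_const f Hf c). rewrite Hc. ring.
  - destruct (poly_horner _ _ Hf) as [c0 [h [Hh Hfh]]].
    destruct (IHn (fun t => h t + - h c)) as [g1 [Hg1 Hg1e]]. apply poly_plus; auto. apply poly_const. lra.
    exists (fun t => h t + c * g1 t). split. simpl. apply poly_plus; auto. apply poly_scal.
    apply (poly_mono (pred n)). lia. auto.
    intros t. rewrite Hfh. rewrite Hfh in Hc. specialize (Hg1e t).
    assert (h t = h c + (t - c) * g1 t) by lra.
    rewrite H. replace c0 with (- (c * h c)) by lra. ring. Qed.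

Lemma Ck_lin n c : Ck n (fun t => t - c).
Proof. apply (Ck_ext _ (fun t => t + - c)). intros; ring. apply Ck_plus. apply Ck_id. apply Ck_const. Qed.

Lemma Derive_lin c x : Derive (fun t => t - c) x = 1.
Proof. rewrite (Derive_ext _ (fun t => t + - c)) by (intros; ring). rewrite Der_plus.
  rewrite Der_id, Derive_const. ring. apply exd_id. apply exd_const. Qed.

Lemma exd_lin c x : ex_derive (fun t => t - c) x.
Proof. assert (H: ex_derive (fun t => t + - c) x) by (apply exd_plus; [apply exd_id|apply exd_const]). revert H. apply ex_derive_ext. intros t; unfold Rminus; reflexivity. Qed.

Lemma smooth_mult f g : smooth f -> smooth g -> smooth (fun x => f x * g x).
Proof. intros Hf Hg n. apply Ck_mult; auto. Qed.

Lemma smooth_lin c : smooth (fun t => t - c).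
Proof. intros n; apply Ck_lin. Qed.

Lemma Dn_xc c i : forall g, smooth g -> forall x,
  Derive_n (fun t => (t - c) * g t) (S i) x = (x - c) * Derive_n g (S i) x + INR (S i) * Derive_n g i x.
Proof. induction i; intros g Hg x.
  - change (Derive (fun t => (t - c) * g t) x = (x - c) * Derive g x + INR 1 * g x). rewrite Derive_mult. rewrite Derive_lin. simpl INR. lra. apply exd_lin. apply smooth_ex_derive; auto.
  - rewrite Dn_S. rewrite (Derive_n_ext _ (fun t => g t + (t - c) * Derive g t)).
    rewrite Dn_plus. rewrite IHi. rewrite <- !Dn_S. rewrite !S_INR. ring.
    apply smooth_Derive; auto. apply Hg. apply smooth_mult. apply smooth_lin. apply smooth_Derive; auto.
    intros t. rewrite Derive_mult. rewrite Derive_lin. ring. apply exd_lin. apply smooth_ex_derive; auto. Qed.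

Lemma poly_mult_root beta : forall n G h c, smooth G -> G c <> 0 -> is_poly n h ->
  (forall i, (i < beta)%nat -> Derive_n (fun t => G t * h t) i c = 0) ->
  exists psi, is_poly (n - beta) psi /\ forall t, h t = (t - c) ^ beta * psi t.
Proof. induction beta; intros n G h c HG HGc Hh Hd.
  - exists h. split. rewrite Nat.sub_0_r; auto. intros; simpl; ring.
  - assert (Hhc : h c = 0). { specialize (Hd O ltac:(lia)). simpl in Hd.
      apply Rmult_integral in Hd. destruct Hd; auto. contradiction. }
    destruct (poly_factor n h c Hh Hhc) as [h1 [Hh1 Hh1e]].
    destruct (IHbeta (pred n) G h1 c HG HGc Hh1) as [psi [Hpsi Hpsie]].
    + intros i Hi. specialize (Hd (S i) ltac:(lia)).
      rewrite (Derive_n_ext _ (fun t => (t - c) * (G t * h1 t))) in Hd.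
      rewrite Dn_xc in Hd. replace (c - c) with 0 in Hd by ring.
      assert (INR (S i) <> 0) by (apply not_0_INR; lia).
      assert (INR (S i) * Derive_n (fun t => G t * h1 t) i c = 0) by lra.
      apply Rmult_integral in H0. destruct H0; auto. contradiction.
      apply smooth_mult; auto. apply (poly_smooth (pred n)); auto.
      intros t. rewrite Hh1e. ring.
    + exists psi. split. replace (n - S beta)%nat with (pred n - beta)%nat by lia. auto.
      intros t. rewrite Hh1e, Hpsie. simpl. ring. Qed.

Lemma compact_bound f : (forall x, continuous f x) -> exists K, forall x, -1 <= x <= 1 -> Rabs (f x) <= K.
Proof. intros H. destruct (continuity_ab_maj (fun x => Rabs (f x)) (-1) 1) as [Mx [HM _]]. lra.
  intros c _. apply continuity_pt_filterlim. apply continuous_Rabs_comp. apply H.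
  exists (Rabs (f Mx)). intros x Hx. apply HM; auto. Qed.

Lemma fin_max (P : nat -> R -> Prop) : (forall m K K', K <= K' -> P m K -> P m K') ->
  forall N, (forall m, (m <= N)%nat -> exists K, P m K) -> exists K, forall m, (m <= N)%nat -> P m K.
Proof. intros Hmono N; induction N; intros H.
  - destruct (H O ltac:(lia)) as [K HK]. exists K. intros m Hm. replace m with O by lia. auto.
  - destruct IHN as [K1 HK1]. intros; apply H; lia. destruct (H (S N) ltac:(lia)) as [K2 HK2].
    exists (Rmax K1 K2). intros m Hm. destruct (Nat.eq_dec m (S N)). subst. apply (Hmono _ K2). apply Rmax_r. auto.
    apply (Hmono _ K1). apply Rmax_l. apply HK1; lia. Qed.

Lemma smooth_Sn_bound f N : smooth f -> exists K, forall x, -1 <= x <= 1 -> Sn N f x <= K.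
Proof. intros Hs. induction N.
  - destruct (compact_bound f) as [K HK]. apply (Ck_cont 0); apply Hs. exists K. intros x Hx.
    unfold Sn; simpl. specialize (HK x Hx). lra.
  - destruct IHN as [K1 HK1]. destruct (compact_bound (Derive_n f (S N))) as [K2 HK2].
    apply (Hs (S N)). exists (K1 + K2). intros x Hx. unfold Sn. 
    assert (E: forall h, sm (S (S N)) h = sm (S N) h + h (S N)) by reflexivity. rewrite E.
    specialize (HK1 x Hx). specialize (HK2 x Hx). unfold Sn in HK1. lra. Qed.


Definition lsumf (Ls : list ((nat->R)->R)) (F : ((nat->R)->R) -> R) := fold_right Rplus 0 (map F Ls).
Definition lsum Ls (a : nat -> R) := lsumf Ls (fun L => Rabs (L a)).

Lemma lsumf_le Ls F G : (forall L, In L Ls -> F L <= G L) -> lsumf Ls F <= lsumf Ls G.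
Proof. induction Ls; intros H; unfold lsumf in *; simpl. lra. assert (F a <= G a) by (apply H; left; auto).
  assert (fold_right Rplus 0 (map F Ls) <= fold_right Rplus 0 (map G Ls)) by (apply IHLs; intros; apply H; right; auto). lra. Qed.

Lemma lsumf_plus Ls F G : lsumf Ls (fun L => F L + G L) = lsumf Ls F + lsumf Ls G.
Proof. induction Ls; unfold lsumf in *; simpl. lra. rewrite IHLs. lra. Qed.

Lemma lsumf_scal Ls c F : lsumf Ls (fun L => c * F L) = c * lsumf Ls F.
Proof. induction Ls; unfold lsumf in *; simpl. lra. rewrite IHLs. lra. Qed.

Lemma lsumf_nonneg Ls F : (forall L, In L Ls -> 0 <= F L) -> 0 <= lsumf Ls F.
Proof. induction Ls; intros H; unfold lsumf in *; simpl. lra.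
  assert (0 <= F a) by (apply H; left; auto). assert (0 <= fold_right Rplus 0 (map F Ls)) by (apply IHLs; intros; apply H; right; auto). lra. Qed.

Lemma lsumf_in Ls F L0 : In L0 Ls -> (forall L, In L Ls -> 0 <= F L) -> F L0 <= lsumf Ls F.
Proof. induction Ls; intros Hin H. destruct Hin. unfold lsumf in *; simpl.
  destruct Hin. subst. assert (0 <= fold_right Rplus 0 (map F Ls)) by (apply lsumf_nonneg; intros; apply H; right; auto). lra.
  assert (F L0 <= fold_right Rplus 0 (map F Ls)) by (apply IHLs; auto; intros; apply H; right; auto).
  assert (0 <= F a) by (apply H; left; auto). lra. Qed.

Lemma lsumf_map Ls (h : ((nat->R)->R) -> ((nat->R)->R)) F : lsumf (map h Ls) F = lsumf Ls (fun L => F (h L)).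
Proof. unfold lsumf. rewrite map_map. auto. Qed.

Lemma lsum_nonneg Ls a : 0 <= lsum Ls a.
Proof. apply lsumf_nonneg; intros; apply Rabs_pos. Qed.

Lemma linalg n : forall (Ls : list ((nat -> R) -> R)),
  (forall L, In L Ls -> exists g, forall a, L a = sm n (fun i => a i * g i)) ->
  (forall a, (forall L, In L Ls -> L a = 0) -> forall i, (i < n)%nat -> a i = 0) ->
  exists C, 0 <= C /\ forall a i, (i < n)%nat -> Rabs (a i) <= C * lsum Ls a.
Proof. induction n; intros Ls Hrep Hinj.
  - exists 0. split. lra. intros; lia.
  - set (e := fun k => if Nat.eqb k n then 1 else 0).
    assert (Hre : forall L, In L Ls -> forall g, (forall a, L a = sm (S n) (fun i => a i * g i)) -> L e = g n).
    { intros L _ g Hg. rewrite Hg. rewrite (sm_single _ _ n). unfold e. rewrite Nat.eqb_refl. ring. lia.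
      intros i Hi Hin. unfold e. replace (Nat.eqb i n) with false. ring. symmetry; apply Nat.eqb_neq; auto. }
    assert (HL0 : exists L0, In L0 Ls /\ L0 e <> 0).
    { apply NNPP. intros Hno. assert (e n = 0). apply (Hinj e). intros L HL. apply NNPP. intros Hne. apply Hno. exists L; auto. lia.
      unfold e in H. rewrite Nat.eqb_refl in H. lra. }
    destruct HL0 as [L0 [HL0in HL0e]].
    destruct (Hrep L0 HL0in) as [g0 Hg0].
    set (gam := g0 n). assert (Hgam : L0 e = gam) by (apply Hre; auto). rewrite Hgam in HL0e.
    set (ext := fun (a : nat -> R) k => if Nat.eqb k n then - sm n (fun i => a i * g0 i) / gam else a k).
    assert (Hext_lt : forall a i, (i < n)%nat -> ext a i = a i).
    { intros a i Hi. unfold ext. replace (Nat.eqb i n) with false. auto. symmetry; apply Nat.eqb_neq; lia. }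
    assert (Hkey : forall L, In L Ls -> forall a, L (ext a) = L a - L0 a * L e / gam).
    { intros L HL a. destruct (Hrep L HL) as [g Hg]. rewrite (Hre L HL g Hg). rewrite !Hg, Hg0.
      simpl. rewrite (sm_ext n (fun i => ext a i * g i) (fun i => a i * g i)).
      unfold ext at 1. rewrite Nat.eqb_refl. fold gam. field. auto.
      intros i Hi. rewrite Hext_lt; auto. }
    set (Ls' := map (fun L => fun a => L (ext a)) Ls).
    destruct (IHn Ls') as [C' [HC' HC'b]].
    + intros L' HL'. unfold Ls' in HL'. apply in_map_iff in HL'. destruct HL' as [L [HLe HL]]. subst L'.
      destruct (Hrep L HL) as [g Hg]. exists (fun i => g i - g0 i * g n / gam). intros a.
      rewrite Hkey; auto. rewrite (Hre L HL g Hg). rewrite Hg, Hg0. simpl.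
      rewrite (sm_ext n (fun i => a i * (g i - g0 i * g n / gam)) (fun i => a i * g i + (- (g n / gam)) * (a i * g0 i))).
      rewrite sm_plus, sm_scal. fold gam. field. auto. intros; field; auto.
    + intros a Ha i Hi. rewrite <- (Hext_lt a i Hi). apply (Hinj (ext a)). intros L HL.
      apply (Ha (fun a => L (ext a))). unfold Ls'. apply in_map_iff. exists L; auto. lia.
    + set (K := lsumf Ls (fun L => Rabs (L e)) / Rabs gam).
      set (G := sm n (fun i => Rabs (g0 i))).
      assert (HK : 0 <= K). { unfold K. apply Rmult_le_pos. apply lsumf_nonneg; intros; apply Rabs_pos.
        apply Rlt_le, Rinv_0_lt_compat. apply Rabs_pos_lt; auto. }
      assert (HG : 0 <= G) by (apply sm_nonneg; intros; apply Rabs_pos).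
      assert (Hgpos : 0 < Rabs gam) by (apply Rabs_pos_lt; auto).
      assert (Hlow : forall a i, (i < n)%nat -> Rabs (a i) <= C' * (1 + K) * lsum Ls a).
      { intros a i Hi. eapply Rle_trans. apply (HC'b a i Hi).
        assert (lsum Ls' a <= (1 + K) * lsum Ls a).
        { unfold lsum at 1, Ls'. rewrite lsumf_map.
          eapply Rle_trans. apply (lsumf_le _ _ (fun L => Rabs (L a) + Rabs (L0 a) / Rabs gam * Rabs (L e))).
          intros L HL. rewrite Hkey; auto. eapply Rle_trans. apply Rabs_triang. rewrite Rabs_Ropp.
          right. unfold Rdiv. rewrite !Rabs_mult, Rabs_inv. ring.
          rewrite lsumf_plus, lsumf_scal. fold (lsum Ls a).
          assert (Rabs (L0 a) <= lsum Ls a) by (apply (lsumf_in Ls (fun L => Rabs (L a))); auto; intros; apply Rabs_pos).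
          unfold K. unfold Rdiv.
          assert (0 <= lsumf Ls (fun L => Rabs (L e))) by (apply lsumf_nonneg; intros; apply Rabs_pos).
          assert (0 < / Rabs gam) by (apply Rinv_0_lt_compat; auto).
          pose proof (lsum_nonneg Ls a). 
          assert (Rabs (L0 a) * / Rabs gam * lsumf Ls (fun L => Rabs (L e)) <= lsum Ls a * / Rabs gam * lsumf Ls (fun L => Rabs (L e))).
          { apply Rmult_le_compat_r; auto. apply Rmult_le_compat_r; lra. }
          nra. }
        pose proof (lsum_nonneg Ls a). nra. }
      exists (C' * (1 + K) + (1 + C' * (1 + K) * G) / Rabs gam). split.
      { assert (0 <= C' * (1 + K)) by (apply Rmult_le_pos; lra). assert (0 <= C' * (1 + K) * G) by (apply Rmult_le_pos; lra).
        apply Rplus_le_le_0_compat. lra. apply Rmult_le_pos. lra. apply Rlt_le, Rinv_0_lt_compat; auto. }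
      intros a i Hi. pose proof (lsum_nonneg Ls a) as HS.
      assert (HCK : 0 <= C' * (1 + K)) by (apply Rmult_le_pos; lra).
      assert (HCKG : 0 <= C' * (1 + K) * G) by (apply Rmult_le_pos; lra).
      assert (H2 : 0 <= (1 + C' * (1 + K) * G) / Rabs gam). { apply Rmult_le_pos. lra. apply Rlt_le, Rinv_0_lt_compat; auto. }
      destruct (Nat.eq_dec i n).
      * subst i. 
        assert (Han : a n = (L0 a - sm n (fun i => a i * g0 i)) / gam). { rewrite Hg0. simpl. fold gam. field. auto. }
        assert (Hsm : Rabs (sm n (fun i => a i * g0 i)) <= C' * (1 + K) * lsum Ls a * G).
        { eapply Rle_trans. apply sm_abs. unfold G. rewrite <- sm_scal. apply sm_le. intros i Hi'.
          rewrite Rabs_mult. apply Rmult_le_compat_r. apply Rabs_pos. apply Hlow; auto. }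
        assert (HL0a : Rabs (L0 a) <= lsum Ls a) by (apply (lsumf_in Ls (fun L => Rabs (L a))); auto; intros; apply Rabs_pos).
        rewrite Han. unfold Rdiv. rewrite Rabs_mult, Rabs_inv.
        assert (Rabs (L0 a - sm n (fun i => a i * g0 i)) <= (1 + C' * (1 + K) * G) * lsum Ls a).
        { eapply Rle_trans. apply Rabs_triang. rewrite Rabs_Ropp. nra. }
        assert (0 < / Rabs gam) by (apply Rinv_0_lt_compat; auto).
        assert (Rabs (L0 a - sm n (fun i => a i * g0 i)) * / Rabs gam <= (1 + C' * (1 + K) * G) * lsum Ls a * / Rabs gam)
          by (apply Rmult_le_compat_r; lra).
        unfold Rdiv in H2. nra.
      * assert (Rabs (a i) <= C' * (1 + K) * lsum Ls a) by (apply Hlow; lia).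
        assert (0 <= (1 + C' * (1 + K) * G) / Rabs gam * lsum Ls a) by nra. nra.
Qed.


Lemma dv2 n : (n = 2 * (n/2) + n mod 2 /\ n mod 2 < 2)%nat.
Proof. split. apply Nat.div_mod_eq. apply Nat.mod_upper_bound. lia. Qed.

Lemma I_zero kI I : lin_functional kI I -> I (fun _ => 0) = 0.
Proof. intros H. pose proof (H 0 0 (fun _ => 0) (fun _ => 0) (Ck_const _ _) (Ck_const _ _)).
  cbv beta in H0.
  replace (fun x : R => 0 * 0 + 0 * 0) with (fun _ : R => 0) in H0. rewrite H0; ring.
  apply functional_extensionality; intros; ring. Qed.

Lemma I_scal kI I c f : lin_functional kI I -> Ck kI f -> I (fun x => c * f x) = c * I f.
Proof. intros H Hf. pose proof (H c 0 f f Hf Hf).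
  cbv beta in H0.
  replace (fun x : R => c * f x + 0 * f x) with (fun x => c * f x) in H0. rewrite H0; ring.
  apply functional_extensionality; intros; ring. Qed.

Lemma I_sum kI I M (c : nat -> R) (F : nat -> R -> R) : lin_functional kI I ->
  (forall j, (j < M)%nat -> Ck kI (F j)) ->
  I (fun s => sm M (fun j => c j * F j s)) = sm M (fun j => c j * I (F j)).
Proof. intros HI. induction M; intros H; simpl. apply (I_zero kI); auto.
  pose proof (HI 1 (c M) (fun s => sm M (fun j => c j * F j s)) (F M)) as HL.
  rewrite (functional_extensionality (fun s => sm M (fun j => c j * F j s) + c M * F M s)
     (fun x => 1 * sm M (fun j => c j * F j x) + c M * F M x)) by (intros; ring).
  rewrite HL. rewrite IHM. ring. intros; apply H; lia.
  apply Ck_sum. intros; apply Ck_scal; apply H; lia. apply H; lia. Qed.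

Lemma Dn_peval r a i x : Derive_n (peval r a) i x = sm (S r) (fun j => a j * Derive_n (fun t => t ^ j) i x).
Proof. unfold peval. rewrite (Dn_sum i (S r) (fun j t => a j * t ^ j)).
  apply sm_ext; intros. apply Derive_n_scal_l. intros; apply Ck_scal, Ck_pow. Qed.

Lemma Derive_peval r a x : Derive (peval r a) x = sm (S r) (fun j => a j * Derive (fun t => t ^ j) x).
Proof. apply (Dn_peval r a 1 x). Qed.


Definition Lleft r i (a : nat -> R) := Derive_n (peval r a) i (-1).
Definition Lright r i (a : nat -> R) := Derive_n (peval r a) i 1.
Definition Lweak r k (I : functional) m (a : nat -> R) :=
  I (fun s => Derive (peval r a) s * s ^ m) + kron0 k * (peval r a (-1) * (-1) ^ m).
Definition iL k := if Nat.leb 1 k then seq 0 (S ((k-1)/2)) else nil.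
Definition iR k := if Nat.leb 2 k then seq 1 (k/2) else nil.
Definition Lset r k I := map (Lleft r) (iL k) ++ map (Lright r) (iR k) ++ map (Lweak r k I) (seq 0 (S (r - k))).

Lemma Lset_cases r k I L : In L (Lset r k I) ->
  (exists i, (1 <= k)%nat /\ (i <= (k-1)/2)%nat /\ L = Lleft r i) \/
  (exists i, (2 <= k)%nat /\ (1 <= i <= k/2)%nat /\ L = Lright r i) \/
  (exists m, (m <= r - k)%nat /\ L = Lweak r k I m).
Proof. unfold Lset. intros H. apply in_app_or in H. destruct H as [H|H].
  - left. apply in_map_iff in H. destruct H as [i [Hi Hin]]. unfold iL in Hin.
    destruct (Nat.leb 1 k) eqn:E. apply in_seq in Hin. apply Nat.leb_le in E. exists i. split; auto. split; auto. lia.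
    destruct Hin.
  - right. apply in_app_or in H. destruct H as [H|H].
    + left. apply in_map_iff in H. destruct H as [i [Hi Hin]]. unfold iR in Hin.
      destruct (Nat.leb 2 k) eqn:E. apply in_seq in Hin. apply Nat.leb_le in E. exists i. split; auto. split; auto. lia.
      destruct Hin.
    + right. apply in_map_iff in H. destruct H as [m [Hm Hin]]. apply in_seq in Hin. exists m. split; auto. lia. Qed.

Lemma Lset_left r k I i : (1 <= k)%nat -> (i <= (k-1)/2)%nat -> In (Lleft r i) (Lset r k I).
Proof. intros. unfold Lset. apply in_or_app. left. apply in_map. unfold iL.
  replace (Nat.leb 1 k) with true by (symmetry; apply Nat.leb_le; lia). apply in_seq. lia. Qed.

Lemma Lset_right r k I i : (2 <= k)%nat -> (1 <= i <= k/2)%nat -> In (Lright r i) (Lset r k I).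
Proof. intros. unfold Lset. apply in_or_app. right. apply in_or_app. left. apply in_map. unfold iR.
  replace (Nat.leb 2 k) with true by (symmetry; apply Nat.leb_le; lia). apply in_seq. lia. Qed.

Lemma Lset_weak r k I m : (m <= r - k)%nat -> In (Lweak r k I m) (Lset r k I).
Proof. intros. unfold Lset. apply in_or_app. right. apply in_or_app. right. apply in_map. apply in_seq. lia. Qed.

Lemma Lset_rep r k kI I : lin_functional kI I -> forall L, In L (Lset r k I) ->
  exists g, forall a, L a = sm (S r) (fun i => a i * g i).
Proof. intros HI L HL. apply Lset_cases in HL. destruct HL as [[i [_ [_ ->]]]|[[i [_ [_ ->]]]|[m [_ ->]]]].
  - exists (fun j => Derive_n (fun t => t ^ j) i (-1)). intros a. apply Dn_peval.
  - exists (fun j => Derive_n (fun t => t ^ j) i 1). intros a. apply Dn_peval.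
  - exists (fun j => I (fun s => Derive (fun t => t ^ j) s * s ^ m) + kron0 k * ((-1) ^ j * (-1) ^ m)).
    intros a. unfold Lweak.
    rewrite (functional_extensionality (fun s => Derive (peval r a) s * s ^ m)
       (fun s => sm (S r) (fun j => a j * (Derive (fun t => t ^ j) s * s ^ m)))).
    rewrite (I_sum kI). unfold peval at 1. 
    rewrite (sm_ext _ (fun i => a i * (I (fun s => Derive (fun t => t ^ i) s * s ^ m) + kron0 k * ((-1) ^ i * (-1) ^ m)))
       (fun i => a i * I (fun s => Derive (fun t => t ^ i) s * s ^ m) + (kron0 k * (-1) ^ m) * (a i * (-1) ^ i))).
    rewrite sm_plus, sm_scal. ring. intros; ring. auto.
    intros j _. apply Ck_mult. apply (proj2 (proj1 (Ck_S kI _) (Ck_pow (S kI) j))). apply Ck_pow.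
    intros s. rewrite Derive_peval. rewrite Rmult_comm, <- sm_scal. apply sm_ext; intros; ring. Qed.


Lemma poly_zero_all n Q : is_poly n Q -> (forall s, -1 <= s <= 1 -> Q s = 0) -> forall t, Q t = 0.
Proof. intros HQ H t. apply is_poly_iff in HQ. destruct HQ as [c Hc].
  assert (Hc0 : forall j, (j <= n)%nat -> c j = 0). { apply coeffs_zero. intros s Hs. rewrite <- Hc. auto. }
  rewrite Hc. unfold peval. rewrite (sm_ext _ _ (fun _ => 0)). apply sm_zero. intros j Hj. rewrite Hc0 by lia. ring. Qed.

Lemma smooth_const_fun f : smooth f -> (forall t, Derive f t = 0) -> forall t u, f t = f u.
Proof. intros Hs HD t u. destruct (MVT_gen f u t (Derive f)) as [c [_ Hc]].
  intros x _. apply Derive_correct. apply smooth_ex_derive; auto.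
  intros x _. apply continuity_pt_filterlim. apply (Ck_cont 0). apply Hs.
  rewrite HD in Hc. lra. Qed.

Lemma pow_shift n t : (t - 1) ^ n = (-1) ^ n * (1 - t) ^ n.
Proof. rewrite <- Rpow_mult_distr. f_equal. ring. Qed.

Lemma Lset_inj r k kI I : (k <= r)%nat -> lin_functional kI I -> AssumptionA1 r k I ->
  forall a, (forall L, In L (Lset r k I) -> L a = 0) -> forall i, (i < S r)%nat -> a i = 0.
Proof. intros Hkr HI HA1 a H i Hi.
  set (q := peval r a).
  assert (Hq : is_poly r q) by (apply is_poly_iff; exists a; auto).
  assert (Hqs : smooth q) by (apply (poly_smooth r); auto).
  set (Q := Derive q).
  assert (HQ : is_poly (r - 1) Q) by (apply poly_deriv'; auto).
  assert (Hweak : forall m, (m <= r - k)%nat -> I (fun s => Q s * s ^ m) + kron0 k * (q (-1) * (-1) ^ m) = 0).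
  { intros m Hm. apply (H _ (Lset_weak r k I m Hm)). }
  assert (Hclaim : (forall t, Q t = 0) /\ q (-1) = 0).
  { destruct (Nat.eq_dec k 0) as [Hk0|Hk0].
    - subst k. unfold kron0 in Hweak. simpl in Hweak. rewrite Nat.sub_0_r in Hweak.
      assert (HQ0 : forall t, Q t = 0).
      { destruct (Nat.eq_dec r 0) as [Hr0|Hr0].
        - intros t. unfold Q. apply poly0_deriv. rewrite <- Hr0. auto.
        - apply (poly_zero_all (r - 1)); auto.
          apply (HA1 ltac:(simpl; lia) Q). simpl. auto.
          intros phi Hphi. simpl.
          assert (Hpp : is_poly r (fun s => (1 + 1 * s) * phi s)).
          { replace r with (S (r - 1)) by lia. apply poly_mul_aff. simpl in Hphi. auto. }
          apply is_poly_iff in Hpp. destruct Hpp as [c Hc].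
          rewrite (functional_extensionality _ (fun s => sm (S r) (fun m => c m * (Q s * s ^ m)))).
          rewrite (I_sum kI). 
          rewrite (sm_ext _ _ (fun m => (- q (-1)) * (c m * (-1) ^ m))).
          rewrite sm_scal. change (sm (S r) (fun m => c m * (-1) ^ m)) with (peval r c (-1)).
          rewrite <- Hc. ring.
          intros m Hm. specialize (Hweak m ltac:(lia)). 
          assert (I (fun s => Q s * s ^ m) = - (q (-1) * (-1) ^ m)) by lra. rewrite H0. ring.
          auto. intros j _. apply Ck_mult. apply (smooth_Derive q Hqs). apply Ck_pow.
          intros s. rewrite <- (sm_ext _ (fun m => Q s * (c m * s ^ m))) by (intros; ring).
          rewrite sm_scal. change (sm (S r) (fun m => c m * s ^ m)) with (peval r c s). rewrite <- Hc.
          simpl. ring. }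
      split; auto. specialize (Hweak O ltac:(lia)).
      rewrite (functional_extensionality (fun s => Q s * s ^ 0) (fun _ => 0)) in Hweak.
      rewrite (I_zero kI) in Hweak by auto. simpl in Hweak. lra.
      intros s; rewrite HQ0; ring.
    - assert (Hk0' : kron0 k = 0) by (unfold kron0; replace (Nat.eqb k 0) with false; auto; symmetry; apply Nat.eqb_neq; auto).
      assert (HL : forall i, (i <= (k-1)/2)%nat -> Derive_n q i (-1) = 0).
      { intros j Hj. apply (H _ (Lset_left r k I j ltac:(lia) Hj)). }
      assert (HR : forall i, (1 <= i <= k/2)%nat -> Derive_n q i 1 = 0).
      { intros j Hj. destruct (Nat.le_gt_cases 2 k).
        apply (H _ (Lset_right r k I j H0 Hj)). pose proof (dv2 k). lia. }
      destruct (poly_mult_root (k/2) (r-1) (fun _ => 1) Q 1) as [psi1 [Hpsi1 HQe]].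
      { intros n; apply Ck_const. } lra. auto.
      { intros j Hj. rewrite (Derive_n_ext _ Q) by (intros; ring). unfold Q. rewrite <- Dn_S. apply HR. lia. }
      destruct (poly_mult_root ((k-1)/2) (r-1-k/2) (fun t => (t - 1) ^ (k/2)) psi1 (-1)) as [psi0 [Hpsi0 Hpsi1e]].
      { apply (poly_smooth (k/2)). apply (poly_ext _ (fun t => (-1 + 1 * t) ^ (k/2))).
        intros; f_equal; ring. apply (poly_aff_pow (k/2) (-1) 1). }
      apply pow_nonzero. lra. auto.
      { intros j Hj. rewrite (Derive_n_ext _ Q) by (intros; rewrite HQe; auto). unfold Q. rewrite <- Dn_S. apply HL. lia. }
      set (psi := fun t => (-1) ^ (k/2) * psi0 t).
      assert (HQf : forall t, Q t = (1 - t) ^ (k/2) * (1 + t) ^ ((k-1)/2) * psi t).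
      { intros t. rewrite HQe, Hpsi1e. unfold psi. rewrite pow_shift. replace (t - -1) with (1 + t) by ring. ring. }
      assert (Hpsiz : forall s, -1 <= s <= 1 -> psi s = 0).
      { apply HA1. rewrite Nat.max_r by lia. auto.
        unfold psi. apply poly_scal. rewrite Nat.max_r by lia.
        replace (r - k)%nat with (r - 1 - k/2 - (k-1)/2)%nat. auto. pose proof (dv2 k). pose proof (dv2 (k-1)). lia.
        intros phi Hphi. replace (Nat.eqb k 0) with false by (symmetry; apply Nat.eqb_neq; auto).
        rewrite Nat.max_r in Hphi by lia. apply is_poly_iff in Hphi. destruct Hphi as [c Hc].
        rewrite (functional_extensionality _ (fun s => sm (S (r - k)) (fun m => c m * (Q s * s ^ m)))).
        rewrite (I_sum kI). rewrite (sm_ext _ _ (fun _ => 0)). apply sm_zero.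
        intros m Hm. specialize (Hweak m ltac:(lia)). rewrite Hk0' in Hweak. assert (I (fun s => Q s * s ^ m) = 0) by lra. rewrite H0. ring. auto.
        intros j _. apply Ck_mult. apply (smooth_Derive q Hqs). apply Ck_pow.
        intros s. rewrite <- (sm_ext _ (fun m => Q s * (c m * s ^ m))) by (intros; ring).
        rewrite sm_scal. change (sm (S (r - k)) (fun m => c m * s ^ m)) with (peval (r - k) c s). rewrite <- Hc.
        rewrite HQf. ring. }
      split. apply (poly_zero_all (r - 1)); auto. intros s Hs. rewrite HQf, Hpsiz; auto; ring.
      apply (HL O). lia. }
  destruct Hclaim as [HQ0 Hqm1].
  apply (coeffs_zero r a). intros t Ht. change (q t = 0). rewrite (smooth_const_fun q Hqs HQ0 t (-1)). auto. lia.
Qed.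


Lemma sm_const n x : sm n (fun _ => x) = INR n * x.
Proof. induction n; simpl sm. simpl; ring. rewrite IHn. rewrite S_INR. ring. Qed.

Lemma enorm_const d x : enorm d (fun _ => x) = sqrt (INR d) * Rabs x.
Proof. unfold enorm. rewrite sumlt_sm, sm_const. rewrite sqrt_mult_alt. f_equal.
  rewrite <- sqrt_Rsqr_abs. f_equal. unfold Rsqr; ring. apply pos_INR. Qed.

Lemma enorm_comp d x c : (c < d)%nat -> Rabs (x c) <= enorm d x.
Proof. intros Hc. unfold enorm. rewrite sumlt_sm. rewrite <- (sqrt_Rsqr_abs (x c)). apply sqrt_le_1_alt.
  replace (Rsqr (x c)) with ((fun i => x i ^ 2) c) by (unfold Rsqr; simpl; ring).
  apply (sm_term_le d (fun i => x i ^ 2) c); auto. intros; apply pow2_ge_0. Qed.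

Lemma enorm_bound d x B : (forall c, (c < d)%nat -> Rabs (x c) <= B) -> enorm d x <= sqrt (INR d) * B.
Proof. intros H. destruct d. unfold enorm; rewrite sumlt_sm; simpl sm; simpl INR; rewrite sqrt_0; lra.
  assert (HB : 0 <= B) by (eapply Rle_trans; [apply Rabs_pos| apply (H O); lia]).
  unfold enorm. rewrite sumlt_sm. rewrite <- (sqrt_Rsqr B) by auto. rewrite <- sqrt_mult_alt by apply pos_INR.
  apply sqrt_le_1_alt. rewrite <- sm_const. apply sm_le. intros i Hi.
  specialize (H i Hi). pose proof (Rabs_pos (x i)). rewrite <- (pow2_abs (x i)). unfold Rsqr. simpl. nra. Qed.

Lemma sumle_scal m c B : sumle m (fun j => c * B j) = c * sumle m B.
Proof. rewrite !sumle_sm. apply sm_scal. Qed.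

Lemma sumle_nonneg m B : (forall j, (j <= m)%nat -> 0 <= B j) -> 0 <= sumle m B.
Proof. intros H. rewrite sumle_sm. apply sm_nonneg. intros; apply H; lia. Qed.

Lemma A2s d kI I : AssumptionA2 d kI I -> (0 < d)%nat -> exists C0, 0 <= C0 /\
  forall h, Ck kI h -> forall B : nat -> R,
    (forall j s, (j <= kI)%nat -> -1 <= s <= 1 -> Rabs (Derive_n h j s) <= B j) ->
    Rabs (I h) <= C0 * sumle kI B.
Proof. intros [C0 HA] Hd. exists (Rmax C0 0). split. apply Rmax_r.
  intros h Hh B HB.
  assert (Hsd : 0 < sqrt (INR d)) by (apply sqrt_lt_R0; apply lt_0_INR; auto).
  assert (HBn : 0 <= sumle kI B).
  { apply sumle_nonneg. intros j Hj. eapply Rle_trans. apply Rabs_pos. apply (HB j 0). auto. lra. }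
  specialize (HA (fun _ => h) (fun c _ => Hh) (fun j => sqrt (INR d) * B j)).
  cbv beta in HA. rewrite enorm_const in HA. rewrite sumle_scal in HA.
  assert (sqrt (INR d) * Rabs (I h) <= C0 * (sqrt (INR d) * sumle kI B)).
  { apply HA. intros j s Hj Hs. rewrite enorm_const. apply Rmult_le_compat_l. lra. apply HB; auto. }
  assert (Rabs (I h) <= C0 * sumle kI B).
  { apply (Rmult_le_reg_l (sqrt (INR d))); auto. lra. }
  eapply Rle_trans. apply H0. apply Rmult_le_compat_r; auto. apply Rmax_l. Qed.

Lemma A3s d kI kO O : AssumptionA3 d kI kO O -> (0 < d)%nat -> exists C1, 0 <= C1 /\
  forall l, (l <= kI)%nat -> forall h, Ck (Nat.max kO l) h -> forall B : nat -> R,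
    (forall j s, (j <= Nat.max kO l)%nat -> -1 <= s <= 1 -> Rabs (Derive_n h j s) <= B j) ->
    forall s, -1 <= s <= 1 -> Rabs (Derive_n (O h) l s) <= C1 * sumle (Nat.max kO l) B.
Proof. intros [C1 HA] Hd. exists (Rmax C1 0). split. apply Rmax_r.
  intros l Hl h Hh B HB s Hs.
  assert (Hsd : 0 < sqrt (INR d)) by (apply sqrt_lt_R0; apply lt_0_INR; auto).
  assert (HBn : 0 <= sumle (Nat.max kO l) B).
  { apply sumle_nonneg. intros j Hj. eapply Rle_trans. apply Rabs_pos. apply (HB j 0). auto. lra. }
  specialize (HA l Hl (fun _ => h) (fun c _ => Hh) (fun j => sqrt (INR d) * B j)).
  assert (sqrt (INR d) * Rabs (Derive_n (O h) l s) <= C1 * (sqrt (INR d) * sumle (Nat.max kO l) B)).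
  { rewrite <- enorm_const, <- sumle_scal. apply HA; auto.
    intros j s' Hj Hs'. rewrite enorm_const. apply Rmult_le_compat_l. lra. apply HB; auto. }
  assert (Rabs (Derive_n (O h) l s) <= C1 * sumle (Nat.max kO l) B).
  { apply (Rmult_le_reg_l (sqrt (INR d))); auto. lra. }
  eapply Rle_trans. apply H0. apply Rmult_le_compat_r; auto. apply Rmax_l. Qed.


Lemma Ck_Dn_cont n f j : Ck n f -> (j <= n)%nat -> forall x, continuous (Derive_n f j) x.
Proof. intros [H1 H2] Hj x. destruct (Nat.eq_dec j n). subst; auto. apply exd_cont. apply H1. lia. Qed.

Lemma closed_bound n v a b (M : nat -> R) : a < b -> Ck n v ->
  (forall j s, (j <= n)%nat -> a < s <= b -> Rabs (Derive_n v j s) <= M j) ->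
  forall j s, (j <= n)%nat -> a <= s <= b -> Rabs (Derive_n v j s) <= M j.
Proof. intros Hab Hv H j s Hj Hs. destruct (Req_dec s a). subst s.
  apply (cont_bound_left _ a b); auto. apply (Ck_Dn_cont n); auto. apply H; auto. lra. Qed.

Lemma powerRZ_sum al n l (M : nat -> R) : 0 < al ->
  (/ al) ^ l * sumle n (fun j => al ^ j * M j) = sumle n (fun j => powerRZ al (Z.of_nat j - Z.of_nat l) * M j).
Proof. intros Hal. rewrite !sumle_sm. rewrite <- sm_scal. apply sm_ext. intros j _.
  unfold Z.sub. rewrite powerRZ_add by lra. rewrite powerRZ_neg'. rewrite <- !pow_powerRZ.
  rewrite pow_inv. ring. Qed.

Lemma Sn_mono j n f x : (j <= n)%nat -> Sn j f x <= Sn n f x.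
Proof. intros H. unfold Sn. apply sm_mono. lia. intros; apply Rabs_pos. Qed.

Lemma Sn_bound n f x B : (forall i, (i <= n)%nat -> Rabs (Derive_n f i x) <= B) -> Sn n f x <= INR (S n) * B.
Proof. intros H. unfold Sn. rewrite <- sm_const. apply sm_le. intros; apply H; lia. Qed.

Definition A2prop kI (I : functional) C0 := forall h, Ck kI h -> forall B : nat -> R,
    (forall j s, (j <= kI)%nat -> -1 <= s <= 1 -> Rabs (Derive_n h j s) <= B j) ->
    Rabs (I h) <= C0 * sumle kI B.

Lemma I_Og_bound kI kO (I : functional) (O : operator) C0 C1 Kp (g : R -> R) W m :
  0 <= C0 -> 0 <= C1 -> smoothing kO O -> A2prop kI I C0 ->
  (forall s, -1 <= s <= 1 -> Sn kI (fun t => t ^ m) s <= Kp) ->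
  Ck (Nat.max kO kI) g -> 0 <= W ->
  (forall i, (i <= kI)%nat -> forall s, -1 <= s <= 1 -> Rabs (Derive_n (O g) i s) <= C1 * W) ->
  Rabs (I (fun s => O g s * s ^ m)) <= C0 * INR (S kI) * (2 ^ kI * (INR (S kI) * (C1 * W)) * Kp).
Proof. intros HC0 HC1 Hsm HA2 HKp Hg HW HOg.
  assert (HOgC : Ck kI (O g)) by (apply Hsm; auto).
  assert (HKp0 : 0 <= Kp) by (eapply Rle_trans; [apply Sn_nonneg| apply (HKp 0); lra]).
  assert (HCW : 0 <= C1 * W) by (apply Rmult_le_pos; auto).
  assert (HS : 0 <= INR (S kI)) by apply pos_INR.
  eapply Rle_trans. apply (HA2 _ (Ck_mult _ _ _ HOgC (Ck_pow _ _)) (fun _ => 2 ^ kI * (INR (S kI) * (C1 * W)) * Kp)).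
  - intros j s Hj Hs. eapply Rle_trans. apply Dn_mult_bound. apply (Ck_le j kI); auto. apply Ck_pow.
    assert (H1 : 2 ^ j <= 2 ^ kI) by (apply Rle_pow; lra || lia).
    assert (H2 : Sn j (O g) s <= INR (S kI) * (C1 * W)).
    { eapply Rle_trans. apply (Sn_mono j kI); auto. apply Sn_bound. intros; apply HOg; auto. }
    assert (H3 : Sn j (fun t => t ^ m) s <= Kp).
    { eapply Rle_trans. apply (Sn_mono j kI); auto. apply HKp; auto. }
    pose proof (Sn_nonneg j (O g) s). pose proof (Sn_nonneg j (fun t => t ^ m) s).
    assert (0 < 2 ^ j) by (apply pow_lt; lra).
    apply Rmult_le_compat. apply Rmult_le_pos; lra. auto. apply Rmult_le_compat; lra. auto.
  - rewrite sumle_sm, sm_const. right; ring. Qed.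


Definition sJ r k (I : functional) (O : operator) a b (v q : R -> R) : Prop :=
  ((1 <= k)%nat -> forall i, (i <= (k-1)/2)%nat -> Derive_n q i a = Derive_n v i a) /\
  ((2 <= k)%nat -> forall i, (1 <= i <= k/2)%nat -> Derive_n q i b = Derive_n v i b) /\
  (forall m, (m <= r - k)%nat ->
     locI I a b (fun t => Derive q t * Tinv a b t ^ m) + kron0 k * (q a * Tinv a b a ^ m)
     = locI I a b (fun t => locO O a b (Derive v) t * Tinv a b t ^ m) + kron0 k * (v a * Tinv a b a ^ m)).

Lemma lsum_bound Ls a X : (forall L, In L Ls -> Rabs (L a) <= X) -> lsum Ls a <= INR (length Ls) * X.
Proof. induction Ls; intros H; unfold lsum, lsumf in *; cbn [length map fold_right]. simpl INR; lra.
  rewrite S_INR. assert (Rabs (a0 a) <= X) by (apply H; left; auto).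
  assert (fold_right Rplus 0 (map (fun L => Rabs (L a)) Ls) <= INR (length Ls) * X) by (apply IHLs; intros; apply H; right; auto).
  lra. Qed.

Lemma kron0_bound k : Rabs (kron0 k) <= 1.
Proof. unfold kron0. destruct (Nat.eqb k 0); rewrite ?Rabs_R1, ?Rabs_R0; lra. Qed.

Lemma core d r k kI kO (I : functional) (O : operator) l :
  (0 < d)%nat -> (k <= r)%nat -> lin_functional kI I -> smoothing kO O ->
  AssumptionA1 r k I -> AssumptionA2 d kI I -> AssumptionA3 d kI kO O ->
  exists K, 0 <= K /\ forall a b (v q : R -> R) (M : nat -> R), a < b -> b - a <= 1 ->
    Ck (kJ k kI kO + 1) v -> is_poly r q -> sJ r k I O a b v q ->
    (forall j s, (j <= kJ k kI kO + 1)%nat -> a < s <= b -> Rabs (Derive_n v j s) <= M j) ->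
    forall s, a < s <= b ->
      Rabs (Derive_n q l s) <= K * sumle (kJ k kI kO + 1) (fun j => powerRZ ((b - a) / 2) (Z.of_nat j - Z.of_nat l) * M j).
Proof.
  intros Hd Hkr HI Hsm HA1 HA2 HA3.
  destruct (A2s d kI I HA2 Hd) as [C0 [HC0 HC0b]].
  destruct (A3s d kI kO O HA3 Hd) as [C1 [HC1 HC1b]].
  set (Ls := Lset r k I).
  destruct (linalg (S r) Ls (Lset_rep r k kI I HI) (Lset_inj r k kI I Hkr HI HA1)) as [CLA [HCLA HCLAb]].
  destruct (fin_max (fun m K => forall s, -1 <= s <= 1 -> Sn kI (fun t => t ^ m) s <= K)) with (N := (r - k)%nat) as [Kp HKp].
  { intros m K K' HK H s Hs. specialize (H s Hs). lra. }
  { intros m _. destruct (smooth_Sn_bound (fun t => t ^ m) kI) as [K HK]. intros n; apply Ck_pow. exists K; auto. }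
  destruct (fin_max (fun j K => forall s, -1 <= s <= 1 -> Sn l (fun t => t ^ j) s <= K)) with (N := r) as [Kl HKl].
  { intros m K K' HK H s Hs. specialize (H s Hs). lra. }
  { intros m _. destruct (smooth_Sn_bound (fun t => t ^ m) l) as [K HK]. intros n; apply Ck_pow. exists K; auto. }
  assert (HKp0 : 0 <= Kp) by (eapply Rle_trans; [apply Sn_nonneg| apply (HKp 0%nat ltac:(lia) 0); lra]).
  assert (HKl0 : 0 <= Kl) by (eapply Rle_trans; [apply Sn_nonneg| apply (HKl 0%nat ltac:(lia) 0); lra]).
  set (KJ := kJ k kI kO). set (mk := Nat.max kO kI).
  set (X := C0 * INR (S kI) * (2 ^ kI * (INR (S kI) * (C1 * INR (S mk)))) * Kp).
  assert (HX : 0 <= X).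
  { unfold X. pose proof (pos_INR (S kI)). pose proof (pos_INR (S mk)). assert (0 < 2 ^ kI) by (apply pow_lt; lra).
    repeat apply Rmult_le_pos; lra. }
  set (Kd := X + 1).
  exists (INR (S r) * (CLA * (INR (length Ls) * Kd)) * Kl). split.
  { pose proof (pos_INR (S r)). pose proof (pos_INR (length Ls)). unfold Kd. repeat apply Rmult_le_pos; lra. }
  intros a b v q M Hab Hba Hv Hq HJ HM s Hs.
  destruct HJ as [HJ1 [HJ2 HJ3]].
  set (al := (b - a) / 2).
  assert (Hal : 0 < al) by (unfold al; lra).
  assert (HvS : Ck (S KJ) v) by (rewrite <- Nat.add_1_r; auto).
  assert (HDv : Ck KJ (Derive v)) by (apply Ck_S in HvS; apply HvS).
  assert (HMc : forall j x, (j <= KJ + 1)%nat -> a <= x <= b -> Rabs (Derive_n v j x) <= M j).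
  { apply (closed_bound (KJ + 1)); auto. }
  assert (HM0 : forall j, (j <= KJ + 1)%nat -> 0 <= M j).
  { intros j Hj. eapply Rle_trans. apply Rabs_pos. apply (HM j b); auto. lra. }
  set (E := sumle (KJ + 1) (fun j => al ^ j * M j)).
  assert (HE : forall j, (j <= KJ + 1)%nat -> al ^ j * M j <= E).
  { intros j Hj. unfold E. rewrite sumle_sm. apply (sm_term_le _ (fun j => al ^ j * M j)). lia.
    intros i Hi. apply Rmult_le_pos. apply pow_le; lra. apply HM0; lia. }
  assert (HE0 : 0 <= E) by (eapply Rle_trans; [|apply (HE 0%nat); lia]; simpl; rewrite Rmult_1_l; apply HM0; lia).
  assert (HT : forall s, -1 <= s <= 1 -> a <= (b + a) / 2 + (b - a) / 2 * s <= b).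
  { intros s0 Hs0. split; nra. }
  assert (Hqs : smooth q) by (apply (poly_smooth r); auto).
  set (qh := fun s => q ((b + a) / 2 + (b - a) / 2 * s)).
  assert (Hqh : is_poly r qh) by (apply poly_comp_aff; auto).
  apply is_poly_iff in Hqh. destruct Hqh as [ca Hca].
  assert (Hpe : peval r ca = qh) by (apply functional_extensionality; intros; symmetry; auto).
  assert (Hpal : forall j, 0 <= al ^ j) by (intros; apply pow_le; lra).
  assert (HKd1 : 1 <= Kd) by (unfold Kd; lra).
  assert (HKJ : (k / 2 <= KJ + 1)%nat).
  { unfold KJ, kJ. pose proof (dv2 k). lia. }
  assert (HKJ' : ((k - 1) / 2 <= k / 2)%nat) by (pose proof (dv2 k); pose proof (dv2 (k - 1)); lia).
  assert (Hdata : forall L, In L Ls -> Rabs (L ca) <= Kd * E).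
  { intros L HL. apply Lset_cases in HL.
    destruct HL as [[i [Hk1 [Hi ->]]]|[[i [Hk2 [Hi ->]]]|[m [Hm ->]]]].
    - unfold Lleft. rewrite Hpe. unfold qh. rewrite Dn_comp_aff by apply Hqs.
      replace ((b + a) / 2 + (b - a) / 2 * -1) with a by field. rewrite HJ1 by auto.
      rewrite Rabs_mult. rewrite (Rabs_pos_eq (((b - a) / 2) ^ i)) by apply Hpal.
      eapply Rle_trans. apply Rmult_le_compat_l. apply Hpal. apply (HM0 i) || idtac. 
      apply HMc. lia. lra. fold al. eapply Rle_trans. apply HE. lia. nra.
    - unfold Lright. rewrite Hpe. unfold qh. rewrite Dn_comp_aff by apply Hqs.
      replace ((b + a) / 2 + (b - a) / 2 * 1) with b by field. rewrite HJ2 by auto.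
      rewrite Rabs_mult. rewrite (Rabs_pos_eq (((b - a) / 2) ^ i)) by apply Hpal.
      eapply Rle_trans. apply Rmult_le_compat_l. apply Hpal.
      apply HMc. lia. lra. fold al. eapply Rle_trans. apply HE. lia. nra.
    - set (g := fun s0 => Derive v ((b + a) / 2 + (b - a) / 2 * s0)).
      assert (HTT : forall s0, Tinv a b (Defs.Tn a b s0) = s0) by (intros; unfold Tinv, Defs.Tn; field; lra).
      assert (HTa : Tinv a b a = -1) by (unfold Tinv; field; lra).
      assert (Hw : Lweak r k I m ca = al * I (fun s0 => O g s0 * s0 ^ m) + kron0 k * (v a * (-1) ^ m)).
      { specialize (HJ3 m Hm). unfold locI, locO in HJ3. cbv beta in HJ3. rewrite HTa in HJ3.
        rewrite (functional_extensionality (fun s0 => Derive q (Defs.Tn a b s0) * Tinv a b (Defs.Tn a b s0) ^ m)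
                   (fun s0 => Derive q (Defs.Tn a b s0) * s0 ^ m)) in HJ3 by (intros; rewrite HTT; auto).
        rewrite (functional_extensionality (fun s0 => O (fun s1 => Derive v (Defs.Tn a b s1)) (Tinv a b (Defs.Tn a b s0)) * Tinv a b (Defs.Tn a b s0) ^ m)
                   (fun s0 => O g s0 * s0 ^ m)) in HJ3 by (intros; rewrite HTT; auto).
        fold al in HJ3. rewrite <- HJ3.
        unfold Lweak. rewrite Hpe.
        rewrite (functional_extensionality (fun s0 => Derive qh s0 * s0 ^ m) (fun s0 => al * (Derive q (Defs.Tn a b s0) * s0 ^ m))).
        rewrite (I_scal kI). replace (qh (-1)) with (q a). reflexivity. unfold qh. f_equal. field. auto.
        unfold Defs.Tn. apply Ck_mult. apply (Ck_comp_aff kI ((b + a) / 2) ((b - a) / 2) (Derive q)). apply smooth_Derive; auto. apply Ck_pow.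
        intros s0. change (Derive qh s0) with (Derive_n qh 1 s0). unfold qh. rewrite Dn_comp_aff by apply Hqs.
        unfold Defs.Tn. simpl. fold al. change (fun x : R => q x) with q. ring. }
      rewrite Hw.
      set (W := sumle mk (fun j => al ^ j * M (S j))).
      assert (HW0 : 0 <= W) by (apply sumle_nonneg; intros; apply Rmult_le_pos; [apply Hpal| apply HM0; unfold mk, KJ, kJ in *; lia]).
      assert (HalW : al * W <= INR (S mk) * E).
      { unfold W. rewrite <- sumle_scal. rewrite sumle_sm, <- sm_const. apply sm_le. intros j Hj.
        replace (al * (al ^ j * M (S j))) with (al ^ (S j) * M (S j)) by (simpl; ring). apply HE.
        unfold mk, KJ, kJ in *; lia. }
      assert (Hg : Ck (Nat.max kO kI) g).
      { unfold g. apply Ck_comp_aff. apply (Ck_le _ KJ). unfold KJ, kJ; lia. auto. }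
      assert (HOg : forall i, (i <= kI)%nat -> forall s0, -1 <= s0 <= 1 -> Rabs (Derive_n (O g) i s0) <= C1 * W).
      { intros i Hi s0 Hs0. eapply Rle_trans. apply (HC1b i Hi g (Ck_le (Nat.max kO i) (Nat.max kO kI) g ltac:(lia) Hg) (fun j => al ^ j * M (S j))).
        + intros j s1 Hj Hs1. unfold g. rewrite Dn_comp_aff. rewrite <- Dn_S. rewrite Rabs_mult.
          rewrite (Rabs_pos_eq (((b - a) / 2) ^ j)) by apply Hpal. fold al. apply Rmult_le_compat_l. apply Hpal.
          apply HMc. unfold KJ, kJ in *; lia. apply HT; auto. apply (Ck_le _ KJ). unfold KJ, kJ in *; lia. auto.
        + auto.
        + apply Rmult_le_compat_l. auto. unfold W. rewrite !sumle_sm. apply sm_mono. lia.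
          intros; apply Rmult_le_pos; [apply Hpal| apply HM0; unfold mk, KJ, kJ in *; lia]. }
      pose proof (I_Og_bound kI kO I O C0 C1 Kp g W m HC0 HC1 Hsm HC0b (HKp m Hm) Hg HW0 HOg) as HIb.
      eapply Rle_trans. apply Rabs_triang. rewrite !Rabs_mult, Rabs_pos_eq by lra.
      rewrite pow_1_abs.
      assert (Hva : Rabs (v a) <= E).
      { eapply Rle_trans. apply (HMc 0%nat a). lia. lra. pose proof (HE 0%nat ltac:(lia)). simpl in H. lra. }
      assert (al * Rabs (I (fun s0 => O g s0 * s0 ^ m)) <= X * E).
      { eapply Rle_trans. apply Rmult_le_compat_l. lra. apply HIb.
        replace (al * (C0 * INR (S kI) * (2 ^ kI * (INR (S kI) * (C1 * W)) * Kp)))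
          with ((C0 * INR (S kI) * 2 ^ kI * INR (S kI) * C1 * Kp) * (al * W)) by ring.
        replace (X * E) with ((C0 * INR (S kI) * 2 ^ kI * INR (S kI) * C1 * Kp) * (INR (S mk) * E)) by (unfold X; ring).
        apply Rmult_le_compat_l; auto. pose proof (pos_INR (S kI)). assert (0 < 2 ^ kI) by (apply pow_lt; lra).
        repeat apply Rmult_le_pos; lra. }
      pose proof (kron0_bound k). pose proof (Rabs_pos (kron0 k)). pose proof (Rabs_pos (v a)).
      assert (Rabs (kron0 k) * (Rabs (v a) * 1) <= E) by nra.
      unfold Kd. lra. }
  assert (Hls : lsum Ls ca <= INR (length Ls) * (Kd * E)) by (apply lsum_bound; auto).
  assert (Hcab : forall j, (j < S r)%nat -> Rabs (ca j) <= CLA * (INR (length Ls) * (Kd * E))).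
  { intros j Hj. eapply Rle_trans. apply HCLAb; auto. apply Rmult_le_compat_l; auto. }
  set (be' := - (b + a) / (b - a)). set (al' := 2 / (b - a)).
  assert (Hal' : al' = / al) by (unfold al', al; field; lra).
  assert (Hqq : forall t, q t = qh (be' + al' * t)) by (intros; unfold qh, be', al'; f_equal; field; lra).
  rewrite (Derive_n_ext q (fun t => qh (be' + al' * t))) by auto.
  rewrite Dn_comp_aff. 2: { apply (poly_smooth r). rewrite <- Hpe. apply is_poly_iff. exists ca; auto. }
  rewrite <- Hpe. rewrite Dn_peval.
  assert (Hs' : -1 <= be' + al' * s <= 1).
  { unfold be', al'. assert (E1 : - (b + a) / (b - a) + 2 / (b - a) * s = (2 * s - (b + a)) / (b - a)) by (field; lra).
    rewrite E1. split.
    - apply (Rmult_le_reg_r (b - a)). lra. unfold Rdiv. rewrite Rmult_assoc, Rinv_l by lra. lra.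
    - apply (Rmult_le_reg_r (b - a)). lra. unfold Rdiv. rewrite Rmult_assoc, Rinv_l by lra. lra. }
  rewrite Rabs_mult. rewrite Hal', <- RPow_abs, (Rabs_pos_eq (/ al)) by (apply Rlt_le, Rinv_0_lt_compat; auto).
  rewrite <- powerRZ_sum by auto. fold E.
  assert (Hsum : Rabs (sm (S r) (fun j => ca j * Derive_n (fun t => t ^ j) l (be' + al' * s)))
                 <= INR (S r) * (CLA * (INR (length Ls) * (Kd * E)) * Kl)).
  { eapply Rle_trans. apply sm_abs. rewrite <- sm_const. apply sm_le. intros j Hj. rewrite Rabs_mult.
    apply Rmult_le_compat. apply Rabs_pos. apply Rabs_pos. apply Hcab; auto.
    eapply Rle_trans. 2: apply (HKl j ltac:(lia) _ Hs').
    unfold Sn. apply (sm_term_le (S l) (fun i => Rabs (Derive_n (fun t => t ^ j) i (be' + al' * s))) l). lia.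
    intros; apply Rabs_pos. }
  rewrite Hal' in Hsum.
  assert (Hil : 0 <= (/ al) ^ l) by (apply pow_le; apply Rlt_le, Rinv_0_lt_compat; auto).
  eapply Rle_trans. apply Rmult_le_compat_l. auto. apply Hsum.
  right. ring.
Qed.


Lemma inner_single d x c f : (c < d)%nat -> inner d x (fun c' => if Nat.eqb c' c then f else 0) = x c * f.
Proof. intros Hc. unfold inner. rewrite sumlt_sm. rewrite (sm_single d _ c Hc). rewrite Nat.eqb_refl. auto.
  intros i Hi Hne. replace (Nat.eqb i c) with false. ring. symmetry; apply Nat.eqb_neq; auto. Qed.

Theorem mainTheorem7 (d r k kI kO : nat) (I : functional) (O : operator) :
  (k <= r)%nat ->
  lin_functional kI I -> lin_operator kO O -> smoothing kO O ->
  AssumptionA1 r k I -> AssumptionA2 d kI I -> AssumptionA3 d kI kO O ->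
  forall l : nat, (l <= r)%nat ->
  exists C : R,
    forall (N : nat) (t : nat -> R), mesh N t ->
    forall n : nat, (1 <= n <= N)%nat ->
    forall v p : vfun,
      vCk d (kJ k kI kO + 1) v ->
      is_J d r k I O (t (n - 1)%nat) (t n) v p ->
      forall M : nat -> R,
        (forall j s, (j <= kJ k kI kO + 1)%nat -> t (n - 1)%nat < s <= t n ->
            enorm d (fun c => Derive_n (v c) j s) <= M j) ->
        forall s, t (n - 1)%nat < s <= t n ->
          enorm d (fun c => Derive_n (p c) l s)
          <= C * sumle (kJ k kI kO + 1)
                   (fun j => powerRZ ((t n - t (n - 1)%nat) / 2)
                               (Z.of_nat j - Z.of_nat l)%Z * M j).
Proof.
  intros Hkr HI HOl Hsm HA1 HA2 HA3 l Hl.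
  destruct (Nat.eq_dec d 0) as [Hd0|Hd0].
  { subst d. exists 0. intros. unfold enorm. rewrite sumlt_sm. simpl sm. rewrite sqrt_0. lra. }
  destruct (core d r k kI kO I O l ltac:(lia) Hkr HI Hsm HA1 HA2 HA3) as [K [HK HKb]].
  exists (sqrt (INR d) * K). intros N t Hmesh n Hn v p Hv HJ M HM s Hs.
  destruct (Hmesh n Hn) as [Hab Hba].
  set (a := t (n - 1)%nat) in *. set (b := t n) in *.
  destruct HJ as [Hpoly [HJ1 [HJ2 HJ3]]].
  rewrite Rmult_assoc. apply enorm_bound. intros c Hc.
  apply (HKb a b (v c) (p c) M Hab Hba (Hv c Hc) (Hpoly c Hc)).
  - split; [|split].
    + intros Hk i Hi. apply HJ1; auto.
    + intros Hk i Hi. apply HJ2; auto.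
    + intros m Hm.
      assert (Hphi : vpoly d (r - k) (fun c' t0 => if Nat.eqb c' c then Tinv a b t0 ^ m else 0)).
      { intros c' Hc'. destruct (Nat.eqb c' c).
        - apply (poly_mono m). auto. apply (poly_ext _ (fun t0 => (- (b + a) / (b - a) + 2 / (b - a) * t0) ^ m)).
          intros; unfold Tinv; f_equal; field; lra. apply poly_aff_pow.
        - apply poly_const. }
      specialize (HJ3 _ Hphi). cbv beta in HJ3.
      rewrite (functional_extensionality (fun t0 => inner d (fun c0 => Derive (p c0) t0) (fun c0 => if Nat.eqb c0 c then Tinv a b t0 ^ m else 0))
        (fun t0 => Derive (p c) t0 * Tinv a b t0 ^ m)) in HJ3 by (intros; apply inner_single; auto).
      rewrite (functional_extensionality (fun t0 => inner d (fun c0 => locO O a b (Derive (v c0)) t0) (fun c0 => if Nat.eqb c0 c then Tinv a b t0 ^ m else 0))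
        (fun t0 => locO O a b (Derive (v c)) t0 * Tinv a b t0 ^ m)) in HJ3 by (intros; apply inner_single; auto).
      rewrite !inner_single in HJ3 by auto.
      exact HJ3.
  - intros j s0 Hj Hs0. eapply Rle_trans. apply (enorm_comp d (fun c => Derive_n (v c) j s0) c Hc). apply HM; auto.
  - auto.
Qed.
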